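(* Let $(A,[\cdot,\cdot],\circ)$ be a Malcev-Poisson algebra and let $\Delta,\delta:A\to A\otimes A$ be linear maps whose duals $\Delta^*,\delta^*$ define a Malcev-Poisson algebra structure on $A^*$ (product $\xi\circ_{A^*}\eta=\Delta^*(\xi\otimes\eta)$, bracket $[\xi,\eta]^*=\delta^*(\xi\otimes\eta)$). Then the following are equivalent: (1) $(A,[\cdot,\cdot],\circ,\Delta,\delta)$ is a Malcev-Poisson bialgebra; (2) $(A,A^*,\mathrm{ad}_A^*,-L^*,\mathrm{ad}_{A^*}^*,-\mathcal{L}_{A^*}^* )$ is a matched pair of Malcev-Poisson algebras; (3) $(A\oplus A^*,A,A^* )$ is a standard Manin triple of Malcev-Poisson algebras with respect to $\omega_d(x+\xi,y+\eta)=\langle x,\eta\rangle+\langle\xi,y\rangle$.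
   Context: All spaces finite-dimensional over an algebraically closed field of characteristic $0$. Malcev algebra: antisymmetric bracket with $J(x,y,[x,z])=[J(x,y,z),x]$, $J(x,y,z)=[[x,y],z]+[[z,x],y]+[[y,z],x]$. Malcev-Poisson algebra: Malcev bracket plus commutative associative product $\circ$ with $[x,y\circ z]=[x,y]\circ z+y\circ[x,z]$. Representations: Malcev, $\varrho([[x,y],z])=\varrho(z)\varrho(y)\varrho(x)-\varrho(y)\varrho(x)\varrho(z)+\varrho(x)\varrho([y,z])+\varrho([x,z])\varrho(y)$; associative, $\mu(x\circ y)=\mu(x)\mu(y)$; Malcev-Poisson, a pair $(\varrho,\mu)$ of these with $\varrho(x\circ y)=\mu(y)\varrho(x)+\mu(x)\varrho(y)$, $\mu([x,y])=\varrho(x)\mu(y)-\mu(y)\varrho(x)$. Notation: $\mathrm{ad}(x)y=[x,y]$, $L(x)y=x\circ y$; for $\theta:A\to\mathrm{End}(V)$, $\langle\theta^*(x)\xi,v\rangle=-\langle\xi,\theta(x)v\rangle$; $\mathrm{ad}_A^*,L^*$ are duals of $\mathrm{ad},L$; $\mathrm{ad}_{A^*}^*,\mathcal{L}_{A^*}^*:A^*\to\mathrm{End}(A)$ are given by $\langle\mathrm{ad}_{A^*}^*(\xi)x,\eta\rangle=-\langle x,[\xi,\eta]^*\rangle$, $\langle\mathcal{L}_{A^*}^*(\xi)x,\eta\rangle=-\langle x,\xi\circ_{A^*}\eta\rangle$. $\tau(x\otimes y)=y\otimes x$, $\sigma(x\otimes y\otimes z\otimes t)=y\otimes z\otimes t\otimes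 x$. Malcev-Poisson bialgebra $(A,[\cdot,\cdot],\circ,\Delta,\delta)$: (a) $(A,[\cdot,\cdot],\circ)$ Malcev-Poisson algebra; (b) $(A,\Delta,\delta)$ Malcev-Poisson coalgebra, i.e. $\tau\Delta=\Delta$, $(\mathrm{id}\otimes\Delta)\Delta=(\Delta\otimes\mathrm{id})\Delta$, $\tau\delta=-\delta$, $(\mathrm{id}\otimes\tau\otimes\mathrm{id})(\delta\otimes\delta)\delta=(\mathrm{id}+\sigma+\sigma^2+\sigma^3)(\delta\otimes\mathrm{id}\otimes\mathrm{id})(\delta\otimes\mathrm{id})\delta$, and $(\mathrm{id}\otimes\Delta)\delta(x)-(\delta\otimes\mathrm{id})\Delta(x)-(\tau\otimes\mathrm{id})(\mathrm{id}\otimes\delta)\Delta(x)=0$; (c) $\Delta(x\circ y)=(L(x)\otimes\mathrm{id})\Delta(y)+(\mathrm{id}\otimes L(y))\Delta(x)$; (d) $(A,[\cdot,\cdot],\delta)$ is a Malcev bialgebra, meaning the Malcev bialgebra compatibility conditions of Vershinin hold, which are equivalent to: $\mathrm{ad}_A^*$, $\mathrm{ad}_{A^*}^*$ being representations and the bracket $[x+\xi,y+\eta]=[x,y]+\mathrm{ad}_{A^*}^*(\xi)y-\mathrm{ad}_{A^*}^*(\eta)x+[\xi,\eta]^*+\mathrm{ad}_A^*(x)\eta-\mathrm{ad}_A^*(y)\xi$ on $A\oplus A^*$ being a Malcev bracket; (e) for all $x,y\in A$: $\delta(x\circ y)+(\mathrm{ad}(y)\otimes\mathrm{id})\Delta(x)-(\mathrm{id}\otimes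 L(x))\delta(y)+(\mathrm{ad}(x)\otimes\mathrm{id})\Delta(y)-(\mathrm{id}\otimes L(y))\delta(x)=0$ and $\Delta([x,y])-(L(y)\otimes\mathrm{id})\delta(x)-(\mathrm{id}\otimes\mathrm{ad}(x))\Delta(y)+(\mathrm{id}\otimes L(y))\delta(x)-(\mathrm{ad}(x)\otimes\mathrm{id})\Delta(y)=0$. Matched pair of Malcev-Poisson algebras $(A_1,A_2,\varrho_1,\mu_1,\varrho_2,\mu_2)$: $\mu_1,\mu_2$ associative representations with $\mu_1(x_1)(x_2\circ_2y_2)=(\mu_1(x_1)x_2)\circ_2y_2+\mu_1(\mu_2(x_2)x_1)y_2$, $\mu_2(x_2)(x_1\circ_1y_1)=(\mu_2(x_2)x_1)\circ_1y_1+\mu_2(\mu_1(x_1)x_2)y_1$; $\varrho_1,\varrho_2$ Malcev representations with $[x_1+x_2,y_1+y_2]=[x_1,y_1]_1+\varrho_2(x_2)y_1-\varrho_2(y_2)x_1+[x_2,y_2]_2+\varrho_1(x_1)y_2-\varrho_1(y_1)x_2$ a Malcev bracket on $A_1\oplus A_2$; $(A_2,\varrho_1,\mu_1)$, $(A_1,\varrho_2,\mu_2)$ Malcev-Poisson representations; and $\varrho_2(x_2)(x_1\circ_1y_1)=(\varrho_2(x_2)x_1)\circ_1y_1+x_1\circ_1(\varrho_2(x_2)y_1)-\mu_2(\varrho_1(x_1)x_2)y_1-\mu_2(\varrho_1(y_1)x_2)x_1$, $\varrho_1(x_1)(x_2\circ_2y_2)=(\varrho_1(x_1)x_2)\circ_2y_2+x_2\circ_2(\varrho_1(x_1)y_2)-\mu_1(\varrho_2(x_2)x_1)y_2-\mu_1(\varrho_2(y_2)x_1)x_2$,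 $[x_1,\mu_2(x_2)y_1]_1-\varrho_2(\mu_1(y_1)x_2)x_1=\mu_2(\varrho_1(x_1)x_2)y_1-(\varrho_2(x_2)x_1)\circ_1y_1+\mu_2(x_2)[x_1,y_1]_1$, $[x_2,\mu_1(x_1)y_2]_2-\varrho_1(\mu_2(y_2)x_1)x_2=\mu_1(\varrho_2(x_2)x_1)y_2-(\varrho_1(x_1)x_2)\circ_2y_2+\mu_1(x_1)[x_2,y_2]_2$. Standard Manin triple: a Malcev-Poisson structure on $A\oplus A^*$ with $A$, $A^*$ as Malcev-Poisson subalgebras and $\omega_d$ invariant: $\omega_d(u\circ v,w)=\omega_d(u,v\circ w)$, $\omega_d([u,v],w)=\omega_d(u,[v,w])$. *)

(* Defs.v *)
(* Finite-dimensional spaces are represented in coordinates: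
   A = K^n ('rV[K]_n, basis ev k), A* = K^n with the dual basis, and
   A (x) A, A (x) A (x) A, A^{(x)4} by their coefficient arrays. *)
From HB Require Import structures.
From mathcomp Require Import all_boot all_order all_algebra.
Set Implicit Arguments. Unset Strict Implicit. Unset Printing Implicit Defensive.
Import GRing.Theory.
Local Open Scope ring_scope.

Section Generic.
Variable K : fieldType.

Definition bilinear_op (V : lmodType K) (f : V -> V -> V) :=
  (forall a x y z, f (a *: x + y) z = a *: f x z + f y z) /\
  (forall a x y z, f z (a *: x + y) = a *: f z x + f z y).

Definition jacobiator (V : lmodType K) (br : V -> V -> V) (x y z : V) : V :=
  br (br x y) z + br (br z x) y + br (br y z) x.

Definition is_malcev (V : lmodType K) (br : V -> V -> V) :=
  bilinear_op br /\ (forall x y, br x y = - br y x) /\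
  (forall x y z, jacobiator br x y (br x z) = br (jacobiator br x y z) x).

Definition is_comm_assoc (V : lmodType K) (m : V -> V -> V) :=
  bilinear_op m /\ (forall x y, m x y = m y x) /\
  (forall x y z, m (m x y) z = m x (m y z)).

Definition is_malcev_poisson (V : lmodType K) (br m : V -> V -> V) :=
  is_malcev br /\ is_comm_assoc m /\
  (forall x y z, br x (m y z) = m (br x y) z + m y (br x z)).

Definition is_linear_rep (A V : lmodType K) (r : A -> V -> V) :=
  (forall a x y v, r (a *: x + y) v = a *: r x v + r y v) /\
  (forall x a v w, r x (a *: v + w) = a *: r x v + r x w).

Definition is_malcev_rep (A V : lmodType K) (brA : A -> A -> A) (r : A -> V -> V) :=
  is_linear_rep r /\
  (forall x y z v,
     r (brA (brA x y) z) v =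
       r z (r y (r x v)) - r y (r x (r z v)) + r x (r (brA y z) v)
       + r (brA x z) (r y v)).

Definition is_assoc_rep (A V : lmodType K) (mA : A -> A -> A) (mu : A -> V -> V) :=
  is_linear_rep mu /\ (forall x y v, mu (mA x y) v = mu x (mu y v)).

Definition is_MP_rep (A V : lmodType K) (brA mA : A -> A -> A)
    (r mu : A -> V -> V) :=
  is_malcev_rep brA r /\ is_assoc_rep mA mu /\
  (forall x y v, r (mA x y) v = mu y (r x v) + mu x (r y v)) /\
  (forall x y v, mu (brA x y) v = r x (mu y v) - mu y (r x v)).

Definition mp_bracket (A1 A2 : lmodType K) (br1 : A1 -> A1 -> A1)
    (br2 : A2 -> A2 -> A2) (r1 : A1 -> A2 -> A2) (r2 : A2 -> A1 -> A1)
    (u v : A1 * A2) : A1 * A2 :=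
  (br1 u.1 v.1 + r2 u.2 v.1 - r2 v.2 u.1,
   br2 u.2 v.2 + r1 u.1 v.2 - r1 v.1 u.2).

Definition matched_pair (A1 A2 : lmodType K)
    (br1 m1 : A1 -> A1 -> A1) (br2 m2 : A2 -> A2 -> A2)
    (r1 mu1 : A1 -> A2 -> A2) (r2 mu2 : A2 -> A1 -> A1) :=
  is_assoc_rep m1 mu1 /\ is_assoc_rep m2 mu2 /\
  (forall x1 x2 y2, mu1 x1 (m2 x2 y2) = m2 (mu1 x1 x2) y2 + mu1 (mu2 x2 x1) y2) /\
  (forall x2 x1 y1, mu2 x2 (m1 x1 y1) = m1 (mu2 x2 x1) y1 + mu2 (mu1 x1 x2) y1) /\
  is_malcev_rep br1 r1 /\ is_malcev_rep br2 r2 /\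
  is_malcev (mp_bracket br1 br2 r1 r2) /\
  is_MP_rep br1 m1 r1 mu1 /\ is_MP_rep br2 m2 r2 mu2 /\
  (forall x2 x1 y1, r2 x2 (m1 x1 y1) =
      m1 (r2 x2 x1) y1 + m1 x1 (r2 x2 y1) - mu2 (r1 x1 x2) y1 - mu2 (r1 y1 x2) x1) /\
  (forall x1 x2 y2, r1 x1 (m2 x2 y2) =
      m2 (r1 x1 x2) y2 + m2 x2 (r1 x1 y2) - mu1 (r2 x2 x1) y2 - mu1 (r2 y2 x1) x2) /\
  (forall x1 x2 y1, br1 x1 (mu2 x2 y1) - r2 (mu1 y1 x2) x1 =
      mu2 (r1 x1 x2) y1 - m1 (r2 x2 x1) y1 + mu2 x2 (br1 x1 y1)) /\
  (forall x2 x1 y2, br2 x2 (mu1 x1 y2) - r1 (mu2 y2 x1) x2 =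
      mu1 (r2 x2 x1) y2 - m2 (r1 x1 x2) y2 + mu1 x1 (br2 x2 y2)).

End Generic.

Section Coordinates.
Variable K : fieldType.
Variable n : nat.
Local Notation vec := 'rV[K]_n.

(* basis vector e_k of A (also the dual basis vector of the dual space) *)
Definition ev (k : 'I_n) : vec := delta_mx 0 k.

Definition pairing (x xi : vec) : K := \sum_i x 0 i * xi 0 i.

Definition dual_rep (U : Type) (th : U -> vec -> vec) (a : U) (v : vec) : vec :=
  \row_k (- \sum_i v 0 i * th a (ev k) 0 i).

(* tensors: coefficient arrays w.r.t. e_a (x) e_b (x) ... *)
Definition tensor2 := 'I_n -> 'I_n -> K.
Definition tensor3 := 'I_n -> 'I_n -> 'I_n -> K.
Definition tensor4 := 'I_n -> 'I_n -> 'I_n -> 'I_n -> K.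

(* linear map A -> A (x) A given by D k = image of e_k *)
Definition cop (D : 'I_n -> tensor2) (x : vec) : tensor2 :=
  fun i j => \sum_k x 0 k * D k i j.

Definition dual_op (D : 'I_n -> tensor2) (xi eta : vec) : vec :=
  \row_k \sum_i \sum_j xi 0 i * eta 0 j * D k i j.

(* f (x) id and id (x) f on A (x) A, for f : A -> A *)
Definition map_l (f : vec -> vec) (T : tensor2) : tensor2 :=
  fun a b => \sum_i T i b * f (ev i) 0 a.
Definition map_r (f : vec -> vec) (T : tensor2) : tensor2 :=
  fun a b => \sum_j T a j * f (ev j) 0 b.
(* id (x) D and D (x) id : A (x) A -> A (x) A (x) A *)
Definition id_cop (D : 'I_n -> tensor2) (T : tensor2) : tensor3 :=
  fun a b c => \sum_j T a j * D j b c.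
Definition cop_id (D : 'I_n -> tensor2) (T : tensor2) : tensor3 :=
  fun a b c => \sum_i T i c * D i a b.
Definition tau_id (T : tensor3) : tensor3 := fun a b c => T b a c.
Definition cop_cop (D : 'I_n -> tensor2) (T : tensor2) : tensor4 :=
  fun a b c d => \sum_i \sum_j T i j * D i a b * D j c d.
Definition cop_id_id (D : 'I_n -> tensor2) (T : tensor3) : tensor4 :=
  fun a b c d => \sum_i T i c d * D i a b.
Definition id_tau_id (T : tensor4) : tensor4 := fun a b c d => T a c b d.
(* sigma (x (x) y (x) z (x) t) = y (x) z (x) t (x) x *)
Definition sigma4 (T : tensor4) : tensor4 := fun a b c d => T d a b c.

Definition MP_coalgebra (Dl Dt : 'I_n -> tensor2) :=
  (forall x a b, cop Dl x b a = cop Dl x a b) /\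
  (forall x a b c, id_cop Dl (cop Dl x) a b c = cop_id Dl (cop Dl x) a b c) /\
  (forall x a b, cop Dt x b a = - cop Dt x a b) /\
  (forall x a b c d,
     let T := cop_id_id Dt (cop_id Dt (cop Dt x)) in
     id_tau_id (cop_cop Dt (cop Dt x)) a b c d =
       T a b c d + sigma4 T a b c d + sigma4 (sigma4 T) a b c d
       + sigma4 (sigma4 (sigma4 T)) a b c d) /\
  (forall x a b c,
     id_cop Dl (cop Dt x) a b c - cop_id Dt (cop Dl x) a b c
     - tau_id (id_cop Dt (cop Dl x)) a b c = 0).

Definition MP_bialgebra (br m : vec -> vec -> vec) (Dl Dt : 'I_n -> tensor2) :=
  is_malcev_poisson br m /\
  MP_coalgebra Dl Dt /\
  (forall x y a b,
     cop Dl (m x y) a b = map_l (m x) (cop Dl y) a b + map_r (m y) (cop Dl x) a b) /\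
  (is_malcev_rep br (dual_rep br) /\
   is_malcev_rep (dual_op Dt) (dual_rep (dual_op Dt)) /\
   is_malcev (mp_bracket br (dual_op Dt) (dual_rep br) (dual_rep (dual_op Dt)))) /\
  (forall x y a b,
     cop Dt (m x y) a b + map_l (br y) (cop Dl x) a b - map_r (m x) (cop Dt y) a b
     + map_l (br x) (cop Dl y) a b - map_r (m y) (cop Dt x) a b = 0) /\
  (forall x y a b,
     cop Dl (br x y) a b - map_l (m y) (cop Dt x) a b - map_r (br x) (cop Dl y) a b
     + map_r (m y) (cop Dt x) a b - map_l (br x) (cop Dl y) a b = 0).

Definition omega_d (u v : vec * vec) : K := pairing u.1 v.2 + pairing v.1 u.2.

Definition std_Manin_triple (br m brd md : vec -> vec -> vec) :=
  exists B P : vec * vec -> vec * vec -> vec * vec,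
    is_malcev_poisson B P /\
    (forall x y, B (x, 0) (y, 0) = (br x y, 0)) /\
    (forall x y, P (x, 0) (y, 0) = (m x y, 0)) /\
    (forall xi eta, B (0, xi) (0, eta) = (0, brd xi eta)) /\
    (forall xi eta, P (0, xi) (0, eta) = (0, md xi eta)) /\
    (forall u v w, omega_d (P u v) w = omega_d u (P v w)) /\
    (forall u v w, omega_d (B u v) w = omega_d u (B v w)).

End Coordinates.

(* Main.v *)
Require Import Defs.
From HB Require Import structures.
From mathcomp Require Import all_boot all_order all_algebra.
From mathcomp Require Import ring.
Set Implicit Arguments. Unset Strict Implicit. Unset Printing Implicit Defensive.
Import GRing.Theory.
Local Open Scope ring_scope.
From Stdlib Require Import FunctionalExtensionality.
Section Bil.
Variable K : fieldType.
Variable V : lmodType K.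
Variable f : V -> V -> V.
Hypothesis Hf : bilinear_op f.

Lemma bDl u v w : f (u + v) w = f u w + f v w.
Proof. by have := (proj1 Hf) 1 u v w; rewrite !scale1r. Qed.
Lemma bDr u v w : f w (u + v) = f w u + f w v.
Proof. by have := (proj2 Hf) 1 u v w; rewrite !scale1r. Qed.
Lemma b0l w : f 0 w = 0.
Proof. by apply: (@addrI _ (f 0 w)); rewrite -bDl !addr0. Qed.
Lemma b0r w : f w 0 = 0.
Proof. by apply: (@addrI _ (f w 0)); rewrite -bDr !addr0. Qed.
Lemma bZl a u w : f (a *: u) w = a *: f u w.
Proof. by have := (proj1 Hf) a u 0 w; rewrite !addr0 b0l addr0. Qed.
Lemma bZr a u w : f w (a *: u) = a *: f w u.
Proof. by have := (proj2 Hf) a u 0 w; rewrite !addr0 b0r addr0. Qed.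
Lemma bNl u w : f (- u) w = - f u w.
Proof. by rewrite -scaleN1r bZl scaleN1r. Qed.
Lemma bNr u w : f w (- u) = - f w u.
Proof. by rewrite -scaleN1r bZr scaleN1r. Qed.
Lemma bBl u v w : f (u - v) w = f u w - f v w.
Proof. by rewrite bDl bNl. Qed.
Lemma bBr u v w : f w (u - v) = f w u - f w v.
Proof. by rewrite bDr bNr. Qed.
End Bil.
Lemma comb3 (K : fieldType) (k1 k2 k3 k : K) (a b c d e f g h : K) :
  k != 0 ->
  k * (g - h) = k1 * (a - b) + k2 * (c - d) + k3 * (e - f) ->
  a = b -> c = d -> e = f -> g = h.
Proof.
move=> ku E ab cd ef; move: E; rewrite ab cd ef !subrr !mulr0 !addr0.
by move/eqP; rewrite mulf_eq0 (negbTE ku) /= subr_eq0 => /eqP.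
Qed.

Section Malcev.
Variable K : fieldType.
Variable n : nat.
Local Notation V := 'rV[K]_n.
Variable br : V -> V -> V.
Hypothesis Hb : bilinear_op br.
Hypothesis Hs : forall x y, br x y = - br y x.
Hypothesis Hm : forall x y z, jacobiator br x y (br x z) = br (jacobiator br x y z) x.

Lemma linM x w y z : jacobiator br x y (br w z) + jacobiator br w y (br x z)
   = br (jacobiator br x y z) w + br (jacobiator br w y z) x.
Proof.
have h1 := Hm x y z; have h2 := Hm w y z; have h3 := Hm (x + w) y z.
move: h1 h2 h3; rewrite /jacobiator.
rewrite !(bDl Hb, bDr Hb).
move=> /rowP h1 /rowP h2 /rowP h3; apply/rowP => j.
move: (h1 j) (h2 j) (h3 j); rewrite !mxE => e1 e2 e3.
apply: (@comb3 _ 1 (-1) (-1) 1 _ _ _ _ _ _ _ _ (oner_neq0 _) _ e3 e1 e2).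
ring.
Qed.
End Malcev.
Section Malcev2.
Variable K : fieldType.
Hypothesis two : (2%:R : K) != 0.
Variable n : nat.
Local Notation V := 'rV[K]_n.
Variable br : V -> V -> V.
Hypothesis Hb : bilinear_op br.
Hypothesis Hs : forall x y, br x y = - br y x.
Hypothesis Hm : forall x y z, jacobiator br x y (br x z) = br (jacobiator br x y z) x.

Lemma sagle x y z t : br (br x z) (br y t) = br (br (br x y) z) t + br (br (br y z) t) x
   + br (br (br z t) x) y + br (br (br t x) y) z.
Proof.
have h1 := linM Hb Hm x y z t; have h2 := linM Hb Hm x z t y; have h3 := linM Hb Hm x t y z.
move: h1 h2 h3; rewrite /jacobiator.
rewrite !(bDl Hb, bDr Hb).
rewrite ?(Hs x t) ?(Hs y t) ?(Hs y x) ?(Hs z t) ?(Hs z x) ?(Hs z y) ?(bNl Hb) ?(bNr Hb) ?opprK.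
rewrite ?(Hs (br t x) y) ?(Hs (br t x) z) ?(Hs (br t y) x) ?(Hs (br t y) z) ?(Hs (br t z) x) ?(Hs (br t z) y) ?(Hs (br x y) t) ?(Hs (br x y) z) ?(Hs (br x y) (br t z)) ?(Hs (br x z) t) ?(Hs (br x z) y) ?(Hs (br x z) (br t y)) ?(Hs (br y z) t) ?(Hs (br y z) x) ?(Hs (br y z) (br t x)) ?(bNl Hb) ?(bNr Hb) ?opprK.
rewrite ?(Hs (br t (br x y)) z) ?(Hs (br t (br x z)) y) ?(Hs (br t (br y z)) x) ?(Hs (br x (br t y)) z) ?(Hs (br x (br t z)) y) ?(Hs (br x (br y z)) t) ?(Hs (br y (br t x)) z) ?(Hs (br y (br t z)) x) ?(Hs (br y (br x z)) t) ?(Hs (br z (br t x)) y) ?(Hs (br z (br t y)) x) ?(Hs (br z (br x y)) t) ?(bNl Hb) ?(bNr Hb) ?opprK.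
move=> /rowP h1 /rowP h2 /rowP h3; apply/rowP => j.
move: (h1 j) (h2 j) (h3 j); rewrite !mxE => e1 e2 e3.
apply: (@comb3 _ 1 (-1) 1 2%:R _ _ _ _ _ _ _ _ two _ e1 e2 e3).
ring.
Qed.
End Malcev2.
Section Malcev3.
Variable K : fieldType.
Hypothesis two : (2%:R : K) != 0.
Variable n : nat.
Local Notation V := 'rV[K]_n.
Variable br : V -> V -> V.
Hypothesis Hb : bilinear_op br.
Hypothesis Hs : forall x y, br x y = - br y x.
Hypothesis Hm : forall x y z, jacobiator br x y (br x z) = br (jacobiator br x y z) x.

Lemma coad x y z t : br (br (br x y) z) t = br x (br y (br z t)) - br z (br x (br y t))
   - br (br y z) (br x t) - br y (br (br x z) t).
Proof.
have h1 := linM Hb Hm x y z t; have h2 := linM Hb Hm x z t y; have h3 := linM Hb Hm x t y z.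
move: h1 h2 h3; rewrite /jacobiator.
rewrite !(bDl Hb, bDr Hb).
rewrite ?(Hs x t) ?(Hs y t) ?(Hs y x) ?(Hs z t) ?(Hs z x) ?(Hs z y) ?(bNl Hb) ?(bNr Hb) ?opprK.
rewrite ?(Hs (br t x) y) ?(Hs (br t x) z) ?(Hs (br t y) x) ?(Hs (br t y) z) ?(Hs (br t z) x) ?(Hs (br t z) y) ?(Hs (br x y) t) ?(Hs (br x y) z) ?(Hs (br x y) (br t z)) ?(Hs (br x z) t) ?(Hs (br x z) y) ?(Hs (br x z) (br t y)) ?(Hs (br y z) t) ?(Hs (br y z) x) ?(Hs (br y z) (br t x)) ?(bNl Hb) ?(bNr Hb) ?opprK.
rewrite ?(Hs (br t (br x y)) z) ?(Hs (br t (br x z)) y) ?(Hs (br t (br y z)) x) ?(Hs (br x (br t y)) z) ?(Hs (br x (br t z)) y) ?(Hs (br x (br y z)) t) ?(Hs (br y (br t x)) z) ?(Hs (br y (br t z)) x) ?(Hs (br y (br x z)) t) ?(Hs (br z (br t x)) y) ?(Hs (br z (br t y)) x) ?(Hs (br z (br x y)) t) ?(bNl Hb) ?(bNr Hb) ?opprK.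
move=> /rowP h1 /rowP h2 /rowP h3; apply/rowP => j.
move: (h1 j) (h2 j) (h3 j); rewrite !mxE => e1 e2 e3.
apply: (@comb3 _ 1 1 (-1) 2%:R _ _ _ _ _ _ _ _ two _ e1 e2 e3).
ring.
Qed.
End Malcev3.
Section Dual.
Variable K : fieldType.
Variable n : nat.
Local Notation V := 'rV[K]_n.

Definition lin (F : V -> V) := forall a u v, F (a *: u + v) = a *: F u + F v.

Lemma lin0 F : lin F -> F 0 = 0.
Proof.
move=> h; apply: (@addrI _ (F 0)); rewrite addr0.
by have := h 1 0 0; rewrite !scale1r !addr0 => <-.
Qed.

Lemma lin_expand F v : lin F -> F v = \sum_k v 0 k *: F (ev K k).
Proof.
move=> h; rewrite {1}(row_sum_delta v).
elim/big_rec2: _ => [|k y1 y2 _ <-]; first exact: lin0.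
by rewrite h.
Qed.

Lemma evE (k : 'I_n) i : (ev K k : V) 0 i = (k == i)%:R.
Proof. by rewrite /ev mxE eqxx eq_sym. Qed.

Lemma pairingC (x y : V) : pairing x y = pairing y x.
Proof. by apply: eq_bigr => i _; rewrite mulrC. Qed.

Lemma pairing_evr (x : V) k : pairing x (ev K k) = x 0 k.
Proof.
rewrite /pairing (bigD1 k) //= evE eqxx mulr1 big1 ?addr0 // => i ik.
by rewrite evE eq_sym (negbTE ik) mulr0.
Qed.
Lemma pairing_evl (x : V) k : pairing (ev K k) x = x 0 k.
Proof. by rewrite pairingC pairing_evr. Qed.

Lemma pairingDl (x y z : V) : pairing (x + y) z = pairing x z + pairing y z.
Proof. by rewrite /pairing -big_split; apply: eq_bigr => i _; rewrite mxE mulrDl. Qed.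
Lemma pairingDr (x y z : V) : pairing z (x + y) = pairing z x + pairing z y.
Proof. by rewrite pairingC pairingDl !(pairingC z). Qed.
Lemma pairingZl a (x z : V) : pairing (a *: x) z = a * pairing x z.
Proof. by rewrite /pairing mulr_sumr; apply: eq_bigr => i _; rewrite mxE mulrA. Qed.
Lemma pairingZr a (x z : V) : pairing z (a *: x) = a * pairing z x.
Proof. by rewrite pairingC pairingZl pairingC. Qed.
Lemma pairingNl (x z : V) : pairing (- x) z = - pairing x z.
Proof. by rewrite -scaleN1r pairingZl mulN1r. Qed.
Lemma pairingNr (x z : V) : pairing z (- x) = - pairing z x.
Proof. by rewrite -scaleN1r pairingZr mulN1r. Qed.
Lemma pairingBl (x y z : V) : pairing (x - y) z = pairing x z - pairing y z.
Proof. by rewrite pairingDl pairingNl. Qed.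
Lemma pairingBr (x y z : V) : pairing z (x - y) = pairing z x - pairing z y.
Proof. by rewrite pairingDr pairingNr. Qed.
Lemma pairing0l (z : V) : pairing 0 z = 0.
Proof. by rewrite /pairing big1 // => i _; rewrite mxE mul0r. Qed.
Lemma pairing0r (z : V) : pairing z 0 = 0.
Proof. by rewrite pairingC pairing0l. Qed.

Lemma pairing_injl (x y : V) : (forall w, pairing x w = pairing y w) -> x = y.
Proof. by move=> h; apply/rowP => k; rewrite -!pairing_evr. Qed.
Lemma pairing_injr (x y : V) : (forall w, pairing w x = pairing w y) -> x = y.
Proof. by move=> h; apply/rowP => k; rewrite -!pairing_evl. Qed.

Lemma dual_rep_pair (U : Type) (th : U -> V -> V) a (v w : V) :
  lin (th a) -> pairing (dual_rep th a v) w = - pairing v (th a w).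
Proof.
move=> h; rewrite (lin_expand w h) /pairing.
under eq_bigr => k _ do rewrite mxE.
rewrite -sumrN.
under [RHS]eq_bigr => i _ do rewrite summxE mulr_sumr -sumrN.
rewrite [RHS]exchange_big /=; apply: eq_bigr => k _.
rewrite mulNr mulr_suml -sumrN; apply: eq_bigr => i _.
by rewrite mxE; ring.
Qed.

Lemma sum_evl (F : 'I_n -> K) i : \sum_a (ev K i : V) 0 a * F a = F i.
Proof.
rewrite (bigD1 i) //= evE eqxx mul1r big1 ?addr0 // => a ai.
by rewrite evE eq_sym (negbTE ai) mul0r.
Qed.

Lemma dual_op_ev (D : 'I_n -> tensor2 K n) i j :
  dual_op D (ev K i) (ev K j) = \row_k D k i j.
Proof.
apply/rowP => k; rewrite !mxE.
under eq_bigr => a _ do under eq_bigr => b _ do rewrite -mulrA.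
under eq_bigr => a _ do rewrite -mulr_sumr sum_evl.
by rewrite sum_evl.
Qed.

Lemma lin_dual_op_r (D : 'I_n -> tensor2 K n) xi : lin (dual_op D xi).
Proof.
move=> a u v; apply/rowP => k; rewrite !mxE mulr_sumr -big_split /=.
apply: eq_bigr => i _; rewrite mulr_sumr -big_split; apply: eq_bigr => j _.
by rewrite !mxE /=; ring.
Qed.
Lemma lin_dual_op_l (D : 'I_n -> tensor2 K n) eta : lin (dual_op D ^~ eta).
Proof.
move=> a u v; apply/rowP => k; rewrite !mxE mulr_sumr -big_split /=.
apply: eq_bigr => i _; rewrite mulr_sumr -big_split; apply: eq_bigr => j _.
by rewrite !mxE /=; ring.
Qed.

Lemma lin_bil_r (f : V -> V -> V) x : bilinear_op f -> lin (f x).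
Proof. by move=> [_ h] a u v; apply: h. Qed.
Lemma lin_bil_l (f : V -> V -> V) x : bilinear_op f -> lin (f ^~ x).
Proof. by move=> [h _] a u v; apply: h. Qed.

Lemma cop_pair (D : 'I_n -> tensor2 K n) (x : V) i j :
  cop D x i j = pairing x (dual_op D (ev K i) (ev K j)).
Proof. by rewrite dual_op_ev /cop /pairing; apply: eq_bigr => k _; rewrite mxE. Qed.

Definition tp (T : tensor2 K n) (xi eta : V) : K :=
  \sum_a \sum_b xi 0 a * eta 0 b * T a b.

Lemma tp_ev T a b : tp T (ev K a) (ev K b) = T a b.
Proof.
rewrite /tp.
under eq_bigr => i _ do under eq_bigr => j _ do rewrite -mulrA.
under eq_bigr => i _ do rewrite -mulr_sumr sum_evl.
by rewrite sum_evl.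
Qed.

Lemma tensor_eqP (T T' : tensor2 K n) :
  (forall a b, T a b = T' a b) <-> (forall xi eta, tp T xi eta = tp T' xi eta).
Proof.
split=> h; last by move=> a b; rewrite -!tp_ev.
by move=> xi eta; apply: eq_bigr => a _; apply: eq_bigr => b _; rewrite h.
Qed.

Lemma tpD (T T' : tensor2 K n) xi eta :
  tp (fun a b => T a b + T' a b) xi eta = tp T xi eta + tp T' xi eta.
Proof.
rewrite /tp -big_split; apply: eq_bigr => a _; rewrite -big_split.
by apply: eq_bigr => b _; rewrite mulrDr.
Qed.
Lemma tpN (T : tensor2 K n) xi eta :
  tp (fun a b => - T a b) xi eta = - tp T xi eta.
Proof.
rewrite /tp -sumrN; apply: eq_bigr => a _; rewrite -sumrN.
by apply: eq_bigr => b _; rewrite mulrN.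
Qed.
Lemma tpB (T T' : tensor2 K n) xi eta :
  tp (fun a b => T a b - T' a b) xi eta = tp T xi eta - tp T' xi eta.
Proof. by rewrite tpD tpN. Qed.
Lemma tp0 xi eta : tp (fun _ _ => 0) xi eta = 0.
Proof. by rewrite /tp big1 // => a _; rewrite big1 // => b _; rewrite mulr0. Qed.

Lemma tp_cop (D : 'I_n -> tensor2 K n) (x : V) xi eta :
  tp (cop D x) xi eta = pairing x (dual_op D xi eta).
Proof.
rewrite /tp /cop /pairing.
under eq_bigr => a _ do under eq_bigr => b _ do rewrite mulr_sumr.
under eq_bigr => a _ do rewrite exchange_big /=.
rewrite exchange_big /=; apply: eq_bigr => k _; rewrite mxE mulr_sumr.
apply: eq_bigr => a _; rewrite mulr_sumr; apply: eq_bigr => b _; ring.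
Qed.

Definition Lt (f : V -> V) (xi : V) : V := \row_i pairing (f (ev K i)) xi.

Lemma tp_map_l f T xi eta : tp (map_l f T) xi eta = tp T (Lt f xi) eta.
Proof.
rewrite /tp /map_l.
under eq_bigr => a _ do under eq_bigr => b _ do rewrite mulr_sumr.
under eq_bigr => a _ do rewrite exchange_big /=.
rewrite exchange_big /=; apply: eq_bigr => i _.
rewrite exchange_big /=; apply: eq_bigr => b _.
rewrite /Lt mxE /pairing !mulr_suml; apply: eq_bigr => a _; ring.
Qed.

Lemma tp_map_r f T xi eta : tp (map_r f T) xi eta = tp T xi (Lt f eta).
Proof.
rewrite /tp /map_r; apply: eq_bigr => a _.
under eq_bigr => b _ do rewrite mulr_sumr.
rewrite exchange_big /=; apply: eq_bigr => j _.
rewrite /Lt mxE /pairing mulr_sumr mulr_suml; apply: eq_bigr => b _; ring.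
Qed.

Lemma Lt_dual (U : Type) (th : U -> V -> V) a xi : Lt (th a) xi = - dual_rep th a xi.
Proof. by apply/rowP => k; rewrite !mxE opprK pairingC. Qed.

End Dual.

Section Dual2.
Variable K : fieldType.
Variable n : nat.
Local Notation V := 'rV[K]_n.

Lemma lin_dual_rep (U : Type) (th : U -> V -> V) a : lin (dual_rep th a).
Proof.
move=> c u v; apply/rowP => k; rewrite !mxE mulrN mulr_sumr -opprD -big_split /=.
by congr (- _); apply: eq_bigr => i _; rewrite !mxE /=; ring.
Qed.

Lemma pinj (x y : V) : (forall w, pairing x w = pairing y w) -> x = y.
Proof. exact: pairing_injl. Qed.
End Dual2.
Section MPRep.
Variable K : fieldType.
Hypothesis two : (2%:R : K) != 0.
Variable n : nat.
Local Notation V := 'rV[K]_n.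
Variables br m : V -> V -> V.
Hypothesis H : is_malcev_poisson br m.

Let Hb : bilinear_op br. Proof. by case: H => [[]]. Qed.
Let Hs : forall x y, br x y = - br y x. Proof. by case: H => [[_ []]]. Qed.
Let Hm : forall x y z, jacobiator br x y (br x z) = br (jacobiator br x y z) x.
Proof. by case: H => [[_ []]]. Qed.
Let Hmb : bilinear_op m. Proof. by case: H => [_ [[]]]. Qed.
Let Hc : forall x y, m x y = m y x. Proof. by case: H => [_ [[_ []]]]. Qed.
Let Ha : forall x y z, m (m x y) z = m x (m y z). Proof. by case: H => [_ [[_ []]]]. Qed.
Let Hl : forall x y z, br x (m y z) = m (br x y) z + m y (br x z).
Proof. by case: H => [_ []]. Qed.

Lemma r_pair x (v w : V) : pairing (dual_rep br x v) w = - pairing v (br x w).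
Proof. by apply: dual_rep_pair; apply: lin_bil_r. Qed.
Lemma m_pair x (v w : V) : pairing (dual_rep m x v) w = - pairing v (m x w).
Proof. by apply: dual_rep_pair; apply: lin_bil_r. Qed.
Lemma mu_pair x (v w : V) : pairing (- dual_rep m x v) w = pairing v (m x w).
Proof. by rewrite pairingNl dual_rep_pair ?opprK //; apply: lin_bil_r. Qed.

Lemma lin_rep_br : is_linear_rep (dual_rep br).
Proof.
split; last by move=> x; apply: lin_dual_rep.
move=> a x y v; apply: pinj => w.
by rewrite pairingDl pairingZl !r_pair (proj1 Hb) pairingDr pairingZr; ring.
Qed.

Lemma lin_rep_m : is_linear_rep (fun x v => - dual_rep m x v).
Proof.
split=> [a x y v|x a v w]; apply: pinj => w'.
  by rewrite pairingDl pairingZl !mu_pair (proj1 Hmb) pairingDr pairingZr.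
by rewrite pairingDl pairingZl !mu_pair pairingDl pairingZl.
Qed.

Lemma malcev_rep_coad : is_malcev_rep br (dual_rep br).
Proof.
split; first exact: lin_rep_br.
move=> x y z v; apply: pinj => w.
rewrite !(pairingDl, pairingNl, r_pair) (coad two Hb Hs Hm).
rewrite !(pairingDr, pairingNr); ring.
Qed.

Lemma assoc_rep_m : is_assoc_rep m (fun x v => - dual_rep m x v).
Proof.
split; first exact: lin_rep_m.
move=> x y v /=; apply: pinj => w.
by rewrite !mu_pair; congr pairing; rewrite -Ha (Hc y x).
Qed.

Lemma br_m_aux x y w : br (m x y) w = br x (m y w) + br y (m x w).
Proof.
rewrite !Hl (Hs (m x y)) Hl (Hc y (br x w)) (Hc x (br y w)) (Hs y x) (bNl Hmb).
rewrite (Hs x w) (Hs y w) (bNl Hmb) (Hc (br w x)) (Hc x (br w y)) (bNl Hmb).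
apply/rowP => j; rewrite !mxE; ring.
Qed.

Lemma MP_rep_coad : is_MP_rep br m (dual_rep br) (fun x v => - dual_rep m x v).
Proof.
split; first exact: malcev_rep_coad.
split; first exact: assoc_rep_m.
split=> x y v; apply: pinj => w.
  by rewrite !(pairingDl, mu_pair, r_pair) br_m_aux pairingDr opprD.
rewrite !(pairingDl, pairingNl, m_pair, r_pair) (Hl x y w) pairingDr.
by rewrite (Hc y (br x w)); ring.
Qed.
End MPRep.
Lemma linN (K : fieldType) n (F : 'rV[K]_n -> 'rV[K]_n) v : lin F -> F (- v) = - F v.
Proof.
by move=> h; have := h (-1) v 0; rewrite (lin0 h) !addr0 !scaleN1r.
Qed.

Lemma dual_repNl (K : fieldType) n (f : 'rV[K]_n -> 'rV[K]_n -> 'rV[K]_n) u v :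
  bilinear_op f -> dual_rep f (- u) v = - dual_rep f u v.
Proof.
move=> Hf; apply/rowP => k; rewrite !mxE (bNl Hf) opprK -sumrN.
by apply: eq_bigr => i _; rewrite mxE mulrN opprK.
Qed.

Section Conv.
Variable K : fieldType.
Hypothesis two : (2%:R : K) != 0.
Variable n : nat.
Local Notation V := 'rV[K]_n.
Variables br m : V -> V -> V.
Variables Dl Dt : 'I_n -> tensor2 K n.
Hypothesis HA : is_malcev_poisson br m.
Hypothesis HB : is_malcev_poisson (dual_op Dt) (dual_op Dl).
Local Notation brd := (dual_op Dt).
Local Notation md := (dual_op Dl).

Let Hb : bilinear_op br. Proof. by case: HA => [[]]. Qed.
Let Hs : forall x y, br x y = - br y x. Proof. by case: HA => [[_ []]]. Qed.
Let Hmb : bilinear_op m. Proof. by case: HA => [_ [[]]]. Qed.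
Let Hc : forall x y, m x y = m y x. Proof. by case: HA => [_ [[_ []]]]. Qed.
Let Hdb : bilinear_op brd. Proof. by case: HB => [[]]. Qed.
Let Hds : forall x y, brd x y = - brd y x. Proof. by case: HB => [[_ []]]. Qed.
Let Hdmb : bilinear_op md. Proof. by case: HB => [_ [[]]]. Qed.
Let Hdc : forall x y, md x y = md y x. Proof. by case: HB => [_ [[_ []]]]. Qed.

Lemma rp x (v w : V) : pairing (dual_rep br x v) w = - pairing v (br x w).
Proof. by apply: dual_rep_pair; apply: lin_bil_r. Qed.
Lemma mp x (v w : V) : pairing (dual_rep m x v) w = - pairing v (m x w).
Proof. by apply: dual_rep_pair; apply: lin_bil_r. Qed.
Lemma rdp x (v w : V) : pairing (dual_rep brd x v) w = - pairing v (brd x w).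
Proof. by apply: dual_rep_pair; apply: lin_bil_r. Qed.
Lemma mdp x (v w : V) : pairing (dual_rep md x v) w = - pairing v (md x w).
Proof. by apply: dual_rep_pair; apply: lin_bil_r. Qed.
Lemma rp' x (v w : V) : pairing v (br x w) = - pairing (dual_rep br x v) w.
Proof. by rewrite rp opprK. Qed.
Lemma mp' x (v w : V) : pairing v (m x w) = - pairing (dual_rep m x v) w.
Proof. by rewrite mp opprK. Qed.

Definition Cc x y xi eta := pairing (m x y) (md xi eta)
  - pairing y (md (- dual_rep m x xi) eta) - pairing x (md xi (- dual_rep m y eta)).

Lemma tp_c x y xi eta :
  tp (fun a b => cop Dl (m x y) a b -
        (map_l (m x) (cop Dl y) a b + map_r (m y) (cop Dl x) a b)) xi eta
  = Cc x y xi eta.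
Proof.
by rewrite tpB tpD tp_map_l tp_map_r !tp_cop !Lt_dual /Cc opprD addrA.
Qed.

Lemma M3_p x xi eta y :
  pairing (- dual_rep m x (md xi eta) -
     (md (- dual_rep m x xi) eta + - dual_rep m (- dual_rep md xi x) eta)) y
  = Cc x y xi eta.
Proof.
rewrite /Cc !(pairingDl, pairingNl) !mp opprK.
rewrite !(bNl Hdmb, bNr Hdmb, bNl Hmb, bNr Hmb, pairingNl, pairingNr, opprK).
rewrite (Hc (dual_rep md xi x) y) (mp' y eta) (pairingC (dual_rep m y eta)) mdp.
rewrite (pairingC (md xi eta)) (pairingC (md _ eta)).
ring.
Qed.

Lemma M4_p xi x y eta :
  pairing (- dual_rep md xi (m x y) -
     (m (- dual_rep md xi x) y + - dual_rep md (- dual_rep m x xi) y)) eta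
  = Cc x y xi eta.
Proof.
rewrite /Cc !(pairingDl, pairingNl) !mdp opprK.
rewrite !(bNl Hdmb, bNr Hdmb, bNl Hmb, bNr Hmb, pairingNl, pairingNr, opprK).
rewrite (Hc (dual_rep md xi x) y) (pairingC (m y _)) (mp' y eta) (pairingC (dual_rep m y eta)) mdp.
ring.
Qed.

Lemma pmL u w (eta : V) : pairing (m u w) eta = - pairing w (dual_rep m u eta).
Proof. by rewrite pairingC mp' pairingC. Qed.
Lemma pbrL u w (eta : V) : pairing (br u w) eta = - pairing w (dual_rep br u eta).
Proof. by rewrite pairingC rp' pairingC. Qed.

Ltac pneg := rewrite ?(bNl Hdmb, bNr Hdmb, bNl Hmb, bNr Hmb, bNl Hdb, bNr Hdb,
   bNl Hb, bNr Hb, pairingNl, pairingNr, opprK, pairingDl, pairingDr, pairingBl, pairingBr).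

Definition E1 x y xi eta := pairing (m x y) (brd xi eta)
  - pairing x (md (dual_rep br y xi) eta) + pairing y (brd xi (dual_rep m x eta))
  - pairing y (md (dual_rep br x xi) eta) + pairing x (brd xi (dual_rep m y eta)).

Lemma tp_e1 x y xi eta :
  tp (fun a b => cop Dt (m x y) a b + map_l (br y) (cop Dl x) a b
     - map_r (m x) (cop Dt y) a b + map_l (br x) (cop Dl y) a b
     - map_r (m y) (cop Dt x) a b) xi eta = E1 x y xi eta.
Proof.
rewrite !(tpB, tpD) !(tp_map_l, tp_map_r) !tp_cop !Lt_dual /E1.
by pneg.
Qed.

Lemma Mr2_p xi x y eta :
  pairing (dual_rep brd xi (m x y) -
    (m (dual_rep brd xi x) y + m x (dual_rep brd xi y)
     - - dual_rep md (dual_rep br x xi) y - - dual_rep md (dual_rep br y xi) x)) eta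
  = - E1 x y xi eta.
Proof.
pneg. rewrite !mdp rdp (Hc (dual_rep brd xi x) y) (pmL y (dual_rep brd xi x)) (pmL x (dual_rep brd xi y)) !rdp /E1.
ring.
Qed.

Lemma M4th_p xi x eta y :
  pairing (brd xi (- dual_rep m x eta) - dual_rep br (- dual_rep md eta x) xi -
    (- dual_rep m (dual_rep brd xi x) eta - md (dual_rep br x xi) eta
     + - dual_rep m x (brd xi eta))) y
  = - E1 x y xi eta.
Proof.
rewrite !(dual_repNl _ _ Hb); pneg.
rewrite (pairingC (brd _ _)) rp (Hs _ y) pairingNr (rp' y) (pairingC (dual_rep br y xi)) mdp (Hdc eta).
rewrite !mp (Hc (dual_rep brd xi x) y) (mp' y eta) (pairingC (dual_rep m y eta)) rdp.
rewrite (pairingC (md _ _)) (pairingC (brd xi eta)) /E1.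
ring.
Qed.

Definition E2 x y xi eta := pairing (br x y) (md xi eta)
  + pairing x (brd (dual_rep m y xi) eta) + pairing y (md xi (dual_rep br x eta))
  - pairing x (brd xi (dual_rep m y eta)) + pairing y (md (dual_rep br x xi) eta).

Lemma tp_e2 x y xi eta :
  tp (fun a b => cop Dl (br x y) a b - map_l (m y) (cop Dt x) a b
     - map_r (br x) (cop Dl y) a b + map_r (m y) (cop Dt x) a b
     - map_l (br x) (cop Dl y) a b) xi eta = E2 x y xi eta.
Proof.
rewrite !(tpB, tpD) !(tp_map_l, tp_map_r) !tp_cop !Lt_dual /E2.
pneg. ring.
Qed.

Lemma Mr1_p x xi eta y :
  pairing (dual_rep br x (md xi eta) -
    (md (dual_rep br x xi) eta + md xi (dual_rep br x eta)
     - - dual_rep m (dual_rep brd xi x) eta - - dual_rep m (dual_rep brd eta x) xi)) y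
  = - E2 x y xi eta.
Proof.
pneg. rewrite rp (pairingC (md xi eta)) (pairingC (md _ eta)) (pairingC (md xi _)).
rewrite !mp (Hc (dual_rep brd xi x) y) (Hc (dual_rep brd eta x) y) !(mp' y).
rewrite (pairingC (dual_rep m y eta)) (pairingC (dual_rep m y xi)) !rdp (Hds eta) /E2.
pneg. ring.
Qed.

Lemma Mbr_p x xi y eta :
  pairing (br x (- dual_rep md xi y) - dual_rep brd (- dual_rep m y xi) x -
    (- dual_rep md (dual_rep br x xi) y - m (dual_rep brd xi x) y
     + - dual_rep md xi (br x y))) eta
  = - E2 x y xi eta.
Proof.
rewrite !(dual_repNl _ _ Hdb); pneg.
rewrite (pbrL x) !mdp rdp (Hc (dual_rep brd xi x) y) (pmL y) rdp /E2.
pneg. ring.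
Qed.
End Conv.
Section Coalg.
Variable K : fieldType.
Hypothesis two : (2%:R : K) != 0.
Variable n : nat.
Local Notation V := 'rV[K]_n.
Variables Dl Dt : 'I_n -> tensor2 K n.
Hypothesis HB : is_malcev_poisson (dual_op Dt) (dual_op Dl).
Local Notation brd := (dual_op Dt).
Local Notation md := (dual_op Dl).
Local Notation e := (ev K).

Let Hdb : bilinear_op brd. Proof. by case: HB => [[]]. Qed.
Let Hds : forall x y, brd x y = - brd y x. Proof. by case: HB => [[_ []]]. Qed.
Let Hdm : forall x y z, jacobiator brd x y (brd x z) = brd (jacobiator brd x y z) x.
Proof. by case: HB => [[_ []]]. Qed.
Let Hdmb : bilinear_op md. Proof. by case: HB => [_ [[]]]. Qed.
Let Hdc : forall x y, md x y = md y x. Proof. by case: HB => [_ [[_ []]]]. Qed.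
Let Hda : forall x y z, md (md x y) z = md x (md y z). Proof. by case: HB => [_ [[_ []]]]. Qed.
Let Hdl : forall x y z, brd x (md y z) = md (brd x y) z + md y (brd x z).
Proof. by case: HB => [_ []]. Qed.

Lemma pairing_sumr (x : V) I r (P : pred I) (F : I -> V) :
  pairing x (\sum_(i <- r | P i) F i) = \sum_(i <- r | P i) pairing x (F i).
Proof.
elim/big_rec2: _ => [|i y1 y2 _ <-]; first exact: pairing0r.
by rewrite pairingDr.
Qed.

Lemma sum_lin (F : V -> V) (x v : V) :
  lin F -> \sum_j v 0 j * pairing x (F (e j)) = pairing x (F v).
Proof.
move=> hF; rewrite [in RHS](lin_expand v hF) pairing_sumr.
by apply: eq_bigr => j _; rewrite pairingZr.
Qed.

Lemma sum_lin' (F : V -> V) (x v : V) :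
  lin F -> \sum_j pairing x (F (e j)) * v 0 j = pairing x (F v).
Proof. by move=> hF; rewrite -(sum_lin x v hF); apply: eq_bigr => j _; rewrite mulrC. Qed.

Lemma Dev (D : 'I_n -> tensor2 K n) k a b : D k a b = (dual_op D (e a) (e b)) 0 k.
Proof. by rewrite dual_op_ev mxE. Qed.

Lemma lin_comp (F G : V -> V) : lin F -> lin G -> lin (F \o G).
Proof. by move=> hF hG a u v /=; rewrite hG hF. Qed.

Lemma id_cop_pair (D D' : 'I_n -> tensor2 K n) (x : V) a b c :
  id_cop D' (cop D x) a b c = pairing x (dual_op D (e a) (dual_op D' (e b) (e c))).
Proof.
rewrite /id_cop; under eq_bigr => j _ do rewrite cop_pair Dev.
exact: (sum_lin' _ _ (lin_dual_op_r _ _)).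
Qed.

Lemma cop_id_pair (D D' : 'I_n -> tensor2 K n) (x : V) a b c :
  cop_id D' (cop D x) a b c = pairing x (dual_op D (dual_op D' (e a) (e b)) (e c)).
Proof.
rewrite /cop_id; under eq_bigr => j _ do rewrite cop_pair Dev.
exact: (sum_lin' _ _ (lin_dual_op_l _ _)).
Qed.

Lemma cop_cop_pair (x : V) a b c d :
  cop_cop Dt (cop Dt x) a b c d = pairing x (brd (brd (e a) (e b)) (brd (e c) (e d))).
Proof.
rewrite /cop_cop.
under eq_bigr => i _ do under eq_bigr => j _ do rewrite cop_pair (Dev Dt i) (Dev Dt j) mulrAC.
under eq_bigr => i _ do rewrite -mulr_suml (sum_lin' _ _ (lin_dual_op_r _ _)).
exact: (sum_lin' _ _ (lin_dual_op_l _ _)).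
Qed.

Lemma cop_id_id_pair (x : V) a b c d :
  cop_id_id Dt (cop_id Dt (cop Dt x)) a b c d
  = pairing x (brd (brd (brd (e a) (e b)) (e c)) (e d)).
Proof.
rewrite /cop_id_id; under eq_bigr => i _ do rewrite cop_id_pair (Dev Dt i).
exact: (sum_lin' _ _ (lin_comp (lin_dual_op_l Dt (e d)) (lin_dual_op_l Dt (e c)))).
Qed.

Lemma coalg_MP : MP_coalgebra Dl Dt.
Proof.
split; first by move=> x a b; rewrite !cop_pair Hdc.
split; first by move=> x a b c; rewrite id_cop_pair cop_id_pair Hda.
split; first by move=> x a b; rewrite !cop_pair Hds pairingNr.
split.
  move=> x a b c d /=; rewrite /id_tau_id /sigma4 cop_cop_pair !cop_id_id_pair.
  by rewrite (sagle two Hdb Hds Hdm) !pairingDr; ring.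
move=> x a b c; rewrite /tau_id id_cop_pair cop_id_pair id_cop_pair Hdl pairingDr.
ring.
Qed.
End Coalg.
Section Decomp.
Variable K : fieldType.
Variable n : nat.
Local Notation V := 'rV[K]_n.
Local Notation W := (V * V)%type.
Variables B P : W -> W -> W.
Hypothesis HBb : bilinear_op B.
Hypothesis HPb : bilinear_op P.

Lemma pairE (a b : W) : a.1 = b.1 -> a.2 = b.2 -> a = b.
Proof. by case: a; case: b => ? ? ? ? /= -> ->. Qed.

Lemma pair_dec (u : W) : u = (u.1, 0) + (0, u.2).
Proof. by case: u => a b; apply: pairE; rewrite /= ?addr0 ?add0r. Qed.

Ltac fin := apply: pairE; apply/rowP => j; rewrite /= !mxE; ring.

Lemma leib_decomp :
  (forall x y z, B (x, 0) (P (y, 0) (z, 0)) = P (B (x, 0) (y, 0)) (z, 0) + P (y, 0) (B (x, 0) (z, 0))) ->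
  (forall x y z, B (x, 0) (P (y, 0) (0, z)) = P (B (x, 0) (y, 0)) (0, z) + P (y, 0) (B (x, 0) (0, z))) ->
  (forall x y z, B (x, 0) (P (0, y) (z, 0)) = P (B (x, 0) (0, y)) (z, 0) + P (0, y) (B (x, 0) (z, 0))) ->
  (forall x y z, B (x, 0) (P (0, y) (0, z)) = P (B (x, 0) (0, y)) (0, z) + P (0, y) (B (x, 0) (0, z))) ->
  (forall x y z, B (0, x) (P (y, 0) (z, 0)) = P (B (0, x) (y, 0)) (z, 0) + P (y, 0) (B (0, x) (z, 0))) ->
  (forall x y z, B (0, x) (P (y, 0) (0, z)) = P (B (0, x) (y, 0)) (0, z) + P (y, 0) (B (0, x) (0, z))) ->
  (forall x y z, B (0, x) (P (0, y) (z, 0)) = P (B (0, x) (0, y)) (z, 0) + P (0, y) (B (0, x) (z, 0))) ->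
  (forall x y z, B (0, x) (P (0, y) (0, z)) = P (B (0, x) (0, y)) (0, z) + P (0, y) (B (0, x) (0, z))) ->
  forall u v w, B u (P v w) = P (B u v) w + P v (B u w).
Proof.
move=> h1 h2 h3 h4 h5 h6 h7 h8 u v w.
rewrite (pair_dec u) (pair_dec v) (pair_dec w).
rewrite !(bDl HPb, bDr HPb, bDl HBb, bDr HBb).
rewrite h1 h2 h3 h4 h5 h6 h7 h8.
fin.
Qed.

Lemma assoc_decomp :
  (forall x y z, P (P (x, 0) (y, 0)) (z, 0) = P (x, 0) (P (y, 0) (z, 0))) ->
  (forall x y z, P (P (x, 0) (y, 0)) (0, z) = P (x, 0) (P (y, 0) (0, z))) ->
  (forall x y z, P (P (x, 0) (0, y)) (z, 0) = P (x, 0) (P (0, y) (z, 0))) ->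
  (forall x y z, P (P (x, 0) (0, y)) (0, z) = P (x, 0) (P (0, y) (0, z))) ->
  (forall x y z, P (P (0, x) (y, 0)) (z, 0) = P (0, x) (P (y, 0) (z, 0))) ->
  (forall x y z, P (P (0, x) (y, 0)) (0, z) = P (0, x) (P (y, 0) (0, z))) ->
  (forall x y z, P (P (0, x) (0, y)) (z, 0) = P (0, x) (P (0, y) (z, 0))) ->
  (forall x y z, P (P (0, x) (0, y)) (0, z) = P (0, x) (P (0, y) (0, z))) ->
  forall u v w, P (P u v) w = P u (P v w).
Proof.
move=> h1 h2 h3 h4 h5 h6 h7 h8 u v w.
rewrite (pair_dec u) (pair_dec v) (pair_dec w).
rewrite !(bDl HPb, bDr HPb).
rewrite h1 h2 h3 h4 h5 h6 h7 h8.
fin.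
Qed.
End Decomp.
Section DRep.
Variable K : fieldType.
Variable n : nat.
Local Notation V := 'rV[K]_n.
Lemma dual_repDl (f : V -> V -> V) u u' v :
  bilinear_op f -> dual_rep f (u + u') v = dual_rep f u v + dual_rep f u' v.
Proof.
move=> Hf; apply/rowP => k; rewrite !mxE (bDl Hf) -opprD; congr (- _); rewrite -big_split /=.
by apply: eq_bigr => i _; rewrite mxE mulrDr.
Qed.
Lemma dual_rep0l (f : V -> V -> V) v : bilinear_op f -> dual_rep f 0 v = 0.
Proof.
move=> Hf; apply/rowP => k; rewrite !mxE (b0l Hf) big1 ?oppr0 // => i _.
by rewrite mxE mulr0.
Qed.
Lemma dual_repDr (U : Type) (th : U -> V -> V) a v v' :
  dual_rep th a (v + v') = dual_rep th a v + dual_rep th a v'.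
Proof. by have := lin_dual_rep th a 1 v v'; rewrite !scale1r. Qed.
Lemma dual_rep0r (U : Type) (th : U -> V -> V) a : dual_rep th a 0 = 0.
Proof. exact: (lin0 (lin_dual_rep th a)). Qed.
Lemma dual_repNr (U : Type) (th : U -> V -> V) a v : dual_rep th a (- v) = - dual_rep th a v.
Proof. exact: (linN _ (lin_dual_rep th a)). Qed.
End DRep.

Section Double.
Variable K : fieldType.
Variable n : nat.
Local Notation V := 'rV[K]_n.
Variables br m : V -> V -> V.
Variables Dl Dt : 'I_n -> tensor2 K n.
Hypothesis HA : is_malcev_poisson br m.
Hypothesis HB : is_malcev_poisson (dual_op Dt) (dual_op Dl).
Local Notation brd := (dual_op Dt).
Local Notation md := (dual_op Dl).
Local Notation r1 := (dual_rep br).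
Local Notation r2 := (dual_rep brd).
Local Notation mu1 x xi := (- dual_rep m x xi).
Local Notation mu2 xi x := (- dual_rep md xi x).

Let Hb : bilinear_op br. Proof. by case: HA => [[]]. Qed.
Let Hs : forall x y, br x y = - br y x. Proof. by case: HA => [[_ []]]. Qed.
Let Hmb : bilinear_op m. Proof. by case: HA => [_ [[]]]. Qed.
Let Hc : forall x y, m x y = m y x. Proof. by case: HA => [_ [[_ []]]]. Qed.
Let Hdb : bilinear_op brd. Proof. by case: HB => [[]]. Qed.
Let Hds : forall x y, brd x y = - brd y x. Proof. by case: HB => [[_ []]]. Qed.
Let Hdmb : bilinear_op md. Proof. by case: HB => [_ [[]]]. Qed.
Let Hdc : forall x y, md x y = md y x. Proof. by case: HB => [_ [[_ []]]]. Qed.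

Definition Bd := mp_bracket br brd r1 r2.
Definition Pd (u v : V * V) : V * V :=
  (m u.1 v.1 + mu2 u.2 v.1 + mu2 v.2 u.1, md u.2 v.2 + mu1 u.1 v.2 + mu1 v.1 u.2).

Definition Dc3 x xi eta := mu1 x (md xi eta) - (md (mu1 x xi) eta + mu1 (mu2 xi x) eta).
Definition Dc4 xi x y := mu2 xi (m x y) - (m (mu2 xi x) y + mu2 (mu1 x xi) y).
Definition Dr2 xi x y := r2 xi (m x y) -
   (m (r2 xi x) y + m x (r2 xi y) - mu2 (r1 x xi) y - mu2 (r1 y xi) x).
Definition Dr1 x xi eta := r1 x (md xi eta) -
   (md (r1 x xi) eta + md xi (r1 x eta) - mu1 (r2 xi x) eta - mu1 (r2 eta x) xi).
Definition Dbr x xi y := br x (mu2 xi y) - r2 (mu1 y xi) x -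
   (mu2 (r1 x xi) y - m (r2 xi x) y + mu2 xi (br x y)).
Definition D4th xi x eta := brd xi (mu1 x eta) - r1 (mu2 eta x) xi -
   (mu1 (r2 xi x) eta - md (r1 x xi) eta + mu1 x (brd xi eta)).
Definition RA3 x y v := r1 (m x y) v - (mu1 y (r1 x v) + mu1 x (r1 y v)).
Definition RA4 x y v := mu1 (br x y) v - (r1 x (mu1 y v) - mu1 y (r1 x v)).
Definition AA x y v := mu1 (m x y) v - mu1 x (mu1 y v).
Definition RD3 x y v := r2 (md x y) v - (mu2 y (r2 x v) + mu2 x (r2 y v)).
Definition RD4 x y v := mu2 (brd x y) v - (r2 x (mu2 y v) - mu2 y (r2 x v)).
Definition AD x y v := mu2 (md x y) v - mu2 x (mu2 y v).
Definition LeA x y z := br x (m y z) - (m (br x y) z + m y (br x z)).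
Definition LeD x y z := brd x (md y z) - (md (brd x y) z + md y (brd x z)).
Definition AsA x y z := m (m x y) z - m x (m y z).
Definition AsD x y z := md (md x y) z - md x (md y z).

Ltac dist := rewrite ?(bDl Hb, bDr Hb, bNl Hb, bNr Hb, b0l Hb, b0r Hb,
  bDl Hmb, bDr Hmb, bNl Hmb, bNr Hmb, b0l Hmb, b0r Hmb,
  bDl Hdb, bDr Hdb, bNl Hdb, bNr Hdb, b0l Hdb, b0r Hdb,
  bDl Hdmb, bDr Hdmb, bNl Hdmb, bNr Hdmb, b0l Hdmb, b0r Hdmb,
  dual_repDl _ _ _ Hb, dual_repDl _ _ _ Hmb, dual_repDl _ _ _ Hdb, dual_repDl _ _ _ Hdmb,
  dual_repNl _ _ Hb, dual_repNl _ _ Hmb, dual_repNl _ _ Hdb, dual_repNl _ _ Hdmb,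
  dual_rep0l _ Hb, dual_rep0l _ Hmb, dual_rep0l _ Hdb, dual_rep0l _ Hdmb,
  dual_repDr, dual_repNr, dual_rep0r, oppr0, opprK, opprD, addr0, add0r, subr0, sub0r).

Ltac fin := apply/rowP => j; rewrite !mxE; ring.

Lemma L1 x y z :
  Bd (x, 0) (Pd (y, 0) (z, 0)) - (Pd (Bd (x, 0) (y, 0)) (z, 0) + Pd (y, 0) (Bd (x, 0) (z, 0)))
  = (LeA x y z, 0).
Proof.
rewrite /Bd /mp_bracket /Pd /=; apply: pairE => /=;
rewrite /Dc3 /Dc4 /Dr2 /Dr1 /Dbr /D4th /RA3 /RA4 /AA /RD3 /RD4 /AD /LeA /LeD /AsA /AsD; dist.
all: rewrite ?(Hc (dual_rep _ _ _)) ?(Hdc (dual_rep _ _ _)); try by [].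
all: fin.
Qed.

Lemma L2 x y z :
  Bd (x, 0) (Pd (y, 0) (0, z)) - (Pd (Bd (x, 0) (y, 0)) (0, z) + Pd (y, 0) (Bd (x, 0) (0, z)))
  = (Dbr x z y, - RA4 x y z).
Proof.
rewrite /Bd /mp_bracket /Pd /=; apply: pairE => /=;
rewrite /Dc3 /Dc4 /Dr2 /Dr1 /Dbr /D4th /RA3 /RA4 /AA /RD3 /RD4 /AD /LeA /LeD /AsA /AsD; dist.
all: rewrite ?(Hc (dual_rep _ _ _)) ?(Hdc (dual_rep _ _ _)); try by [].
all: fin.
Qed.

Lemma L3 x y z :
  Bd (x, 0) (Pd (0, y) (z, 0)) - (Pd (Bd (x, 0) (0, y)) (z, 0) + Pd (0, y) (Bd (x, 0) (z, 0)))
  = (Dbr x y z, - RA4 x z y).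
Proof.
rewrite /Bd /mp_bracket /Pd /=; apply: pairE => /=;
rewrite /Dc3 /Dc4 /Dr2 /Dr1 /Dbr /D4th /RA3 /RA4 /AA /RD3 /RD4 /AD /LeA /LeD /AsA /AsD; dist.
all: rewrite ?(Hc (dual_rep _ _ _)) ?(Hdc (dual_rep _ _ _)); try by [].
all: fin.
Qed.

Lemma L4 x y z :
  Bd (x, 0) (Pd (0, y) (0, z)) - (Pd (Bd (x, 0) (0, y)) (0, z) + Pd (0, y) (Bd (x, 0) (0, z)))
  = (- RD3 y z x, Dr1 x y z).
Proof.
rewrite /Bd /mp_bracket /Pd /=; apply: pairE => /=;
rewrite /Dc3 /Dc4 /Dr2 /Dr1 /Dbr /D4th /RA3 /RA4 /AA /RD3 /RD4 /AD /LeA /LeD /AsA /AsD; dist.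
all: rewrite ?(Hc (dual_rep _ _ _)) ?(Hdc (dual_rep _ _ _)); try by [].
all: fin.
Qed.

Lemma L5 x y z :
  Bd (0, x) (Pd (y, 0) (z, 0)) - (Pd (Bd (0, x) (y, 0)) (z, 0) + Pd (y, 0) (Bd (0, x) (z, 0)))
  = (Dr2 x y z, - RA3 y z x).
Proof.
rewrite /Bd /mp_bracket /Pd /=; apply: pairE => /=;
rewrite /Dc3 /Dc4 /Dr2 /Dr1 /Dbr /D4th /RA3 /RA4 /AA /RD3 /RD4 /AD /LeA /LeD /AsA /AsD; dist.
all: rewrite ?(Hc (dual_rep _ _ _)) ?(Hdc (dual_rep _ _ _)); try by [].
all: fin.
Qed.

Lemma L6 x y z :
  Bd (0, x) (Pd (y, 0) (0, z)) - (Pd (Bd (0, x) (y, 0)) (0, z) + Pd (y, 0) (Bd (0, x) (0, z)))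
  = (- RD4 x z y, D4th x y z).
Proof.
rewrite /Bd /mp_bracket /Pd /=; apply: pairE => /=;
rewrite /Dc3 /Dc4 /Dr2 /Dr1 /Dbr /D4th /RA3 /RA4 /AA /RD3 /RD4 /AD /LeA /LeD /AsA /AsD; dist.
all: rewrite ?(Hc (dual_rep _ _ _)) ?(Hdc (dual_rep _ _ _)); try by [].
all: fin.
Qed.

Lemma L7 x y z :
  Bd (0, x) (Pd (0, y) (z, 0)) - (Pd (Bd (0, x) (0, y)) (z, 0) + Pd (0, y) (Bd (0, x) (z, 0)))
  = (- RD4 x y z, D4th x z y).
Proof.
rewrite /Bd /mp_bracket /Pd /=; apply: pairE => /=;
rewrite /Dc3 /Dc4 /Dr2 /Dr1 /Dbr /D4th /RA3 /RA4 /AA /RD3 /RD4 /AD /LeA /LeD /AsA /AsD; dist.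
all: rewrite ?(Hc (dual_rep _ _ _)) ?(Hdc (dual_rep _ _ _)); try by [].
all: fin.
Qed.

Lemma L8 x y z :
  Bd (0, x) (Pd (0, y) (0, z)) - (Pd (Bd (0, x) (0, y)) (0, z) + Pd (0, y) (Bd (0, x) (0, z)))
  = (0, LeD x y z).
Proof.
rewrite /Bd /mp_bracket /Pd /=; apply: pairE => /=;
rewrite /Dc3 /Dc4 /Dr2 /Dr1 /Dbr /D4th /RA3 /RA4 /AA /RD3 /RD4 /AD /LeA /LeD /AsA /AsD; dist.
all: rewrite ?(Hc (dual_rep _ _ _)) ?(Hdc (dual_rep _ _ _)); try by [].
all: fin.
Qed.

Lemma A1 x y z :
  Pd (Pd (x, 0) (y, 0)) (z, 0) - Pd (x, 0) (Pd (y, 0) (z, 0))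
  = (AsA x y z, 0).
Proof.
rewrite /Bd /mp_bracket /Pd /=; apply: pairE => /=;
rewrite /Dc3 /Dc4 /Dr2 /Dr1 /Dbr /D4th /RA3 /RA4 /AA /RD3 /RD4 /AD /LeA /LeD /AsA /AsD; dist.
all: rewrite ?(Hc (dual_rep _ _ _)) ?(Hdc (dual_rep _ _ _)); try by [].
all: fin.
Qed.

Lemma A2 x y z :
  Pd (Pd (x, 0) (y, 0)) (0, z) - Pd (x, 0) (Pd (y, 0) (0, z))
  = (Dc4 z y x, AA x y z).
Proof.
rewrite /Bd /mp_bracket /Pd /=; apply: pairE => /=;
rewrite /Dc3 /Dc4 /Dr2 /Dr1 /Dbr /D4th /RA3 /RA4 /AA /RD3 /RD4 /AD /LeA /LeD /AsA /AsD; dist.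
all: rewrite ?(Hc (dual_rep _ _ _)) ?(Hdc (dual_rep _ _ _)); try by [].
all: rewrite ?(Hc y x).
all: fin.
Qed.

Lemma A3 x y z :
  Pd (Pd (x, 0) (0, y)) (z, 0) - Pd (x, 0) (Pd (0, y) (z, 0))
  = (Dc4 y z x - Dc4 y x z, AA x z y - AA z x y).
Proof.
rewrite /Bd /mp_bracket /Pd /=; apply: pairE => /=;
rewrite /Dc3 /Dc4 /Dr2 /Dr1 /Dbr /D4th /RA3 /RA4 /AA /RD3 /RD4 /AD /LeA /LeD /AsA /AsD; dist.
all: rewrite ?(Hc (dual_rep _ _ _)) ?(Hdc (dual_rep _ _ _)); try by [].
all: rewrite ?(Hc z x).
all: fin.
Qed.

Lemma A4 x y z :
  Pd (Pd (x, 0) (0, y)) (0, z) - Pd (x, 0) (Pd (0, y) (0, z))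
  = (- AD z y x, - Dc3 x y z).
Proof.
rewrite /Bd /mp_bracket /Pd /=; apply: pairE => /=;
rewrite /Dc3 /Dc4 /Dr2 /Dr1 /Dbr /D4th /RA3 /RA4 /AA /RD3 /RD4 /AD /LeA /LeD /AsA /AsD; dist.
all: rewrite ?(Hc (dual_rep _ _ _)) ?(Hdc (dual_rep _ _ _)); try by [].
all: rewrite ?(Hdc z y).
all: fin.
Qed.

Lemma A5 x y z :
  Pd (Pd (0, x) (y, 0)) (z, 0) - Pd (0, x) (Pd (y, 0) (z, 0))
  = (- Dc4 x y z, - AA z y x).
Proof.
rewrite /Bd /mp_bracket /Pd /=; apply: pairE => /=;
rewrite /Dc3 /Dc4 /Dr2 /Dr1 /Dbr /D4th /RA3 /RA4 /AA /RD3 /RD4 /AD /LeA /LeD /AsA /AsD; dist.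
all: rewrite ?(Hc (dual_rep _ _ _)) ?(Hdc (dual_rep _ _ _)); try by [].
all: rewrite ?(Hc z y).
all: fin.
Qed.

Lemma A6 x y z :
  Pd (Pd (0, x) (y, 0)) (0, z) - Pd (0, x) (Pd (y, 0) (0, z))
  = (AD x z y - AD z x y, Dc3 y z x - Dc3 y x z).
Proof.
rewrite /Bd /mp_bracket /Pd /=; apply: pairE => /=;
rewrite /Dc3 /Dc4 /Dr2 /Dr1 /Dbr /D4th /RA3 /RA4 /AA /RD3 /RD4 /AD /LeA /LeD /AsA /AsD; dist.
all: rewrite ?(Hc (dual_rep _ _ _)) ?(Hdc (dual_rep _ _ _)); try by [].
all: rewrite ?(Hdc z x).
all: fin.
Qed.

Lemma A7 x y z :
  Pd (Pd (0, x) (0, y)) (z, 0) - Pd (0, x) (Pd (0, y) (z, 0))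
  = (AD x y z, Dc3 z y x).
Proof.
rewrite /Bd /mp_bracket /Pd /=; apply: pairE => /=;
rewrite /Dc3 /Dc4 /Dr2 /Dr1 /Dbr /D4th /RA3 /RA4 /AA /RD3 /RD4 /AD /LeA /LeD /AsA /AsD; dist.
all: rewrite ?(Hc (dual_rep _ _ _)) ?(Hdc (dual_rep _ _ _)); try by [].
all: rewrite ?(Hdc y x).
all: fin.
Qed.

Lemma A8 x y z :
  Pd (Pd (0, x) (0, y)) (0, z) - Pd (0, x) (Pd (0, y) (0, z))
  = (0, AsD x y z).
Proof.
rewrite /Bd /mp_bracket /Pd /=; apply: pairE => /=;
rewrite /Dc3 /Dc4 /Dr2 /Dr1 /Dbr /D4th /RA3 /RA4 /AA /RD3 /RD4 /AD /LeA /LeD /AsA /AsD; dist.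
all: rewrite ?(Hc (dual_rep _ _ _)) ?(Hdc (dual_rep _ _ _)); try by [].
all: fin.
Qed.

End Double.
Section DRepZ.
Variable K : fieldType.
Variable n : nat.
Local Notation V := 'rV[K]_n.
Lemma dual_repZl (f : V -> V -> V) a u v :
  bilinear_op f -> dual_rep f (a *: u) v = a *: dual_rep f u v.
Proof.
move=> Hf; apply/rowP => k; rewrite !mxE (bZl Hf) mulrN mulr_sumr; congr (- _).
by apply: eq_bigr => i _; rewrite mxE; ring.
Qed.
Lemma dual_repZr (U : Type) (th : U -> V -> V) x a v :
  dual_rep th x (a *: v) = a *: dual_rep th x v.
Proof. by have := lin_dual_rep th x a v 0; rewrite addr0 dual_rep0r addr0. Qed.
End DRepZ.

Section Double2.
Variable K : fieldType.
Variable n : nat.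
Local Notation V := 'rV[K]_n.
Variables br m : V -> V -> V.
Variables Dl Dt : 'I_n -> tensor2 K n.
Hypothesis HA : is_malcev_poisson br m.
Hypothesis HB : is_malcev_poisson (dual_op Dt) (dual_op Dl).
Local Notation brd := (dual_op Dt).
Local Notation md := (dual_op Dl).
Local Notation r1 := (dual_rep br).
Local Notation r2 := (dual_rep brd).
Local Notation mu1 x xi := (- dual_rep m x xi).
Local Notation mu2 xi x := (- dual_rep md xi x).

Let Hb : bilinear_op br. Proof. by case: HA => [[]]. Qed.
Let Hs : forall x y, br x y = - br y x. Proof. by case: HA => [[_ []]]. Qed.
Let Hmb : bilinear_op m. Proof. by case: HA => [_ [[]]]. Qed.
Let Hc : forall x y, m x y = m y x. Proof. by case: HA => [_ [[_ []]]]. Qed.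
Let Hdb : bilinear_op brd. Proof. by case: HB => [[]]. Qed.
Let Hds : forall x y, brd x y = - brd y x. Proof. by case: HB => [[_ []]]. Qed.
Let Hdmb : bilinear_op md. Proof. by case: HB => [_ [[]]]. Qed.
Let Hdc : forall x y, md x y = md y x. Proof. by case: HB => [_ [[_ []]]]. Qed.

Ltac dist := rewrite ?(bDl Hb, bDr Hb, bNl Hb, bNr Hb, b0l Hb, b0r Hb,
  bDl Hmb, bDr Hmb, bNl Hmb, bNr Hmb, b0l Hmb, b0r Hmb,
  bDl Hdb, bDr Hdb, bNl Hdb, bNr Hdb, b0l Hdb, b0r Hdb,
  bDl Hdmb, bDr Hdmb, bNl Hdmb, bNr Hdmb, b0l Hdmb, b0r Hdmb,
  dual_repDl _ _ _ Hb, dual_repDl _ _ _ Hmb, dual_repDl _ _ _ Hdb, dual_repDl _ _ _ Hdmb,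
  dual_repNl _ _ Hb, dual_repNl _ _ Hmb, dual_repNl _ _ Hdb, dual_repNl _ _ Hdmb,
  dual_rep0l _ Hb, dual_rep0l _ Hmb, dual_rep0l _ Hdb, dual_rep0l _ Hdmb,
  dual_repDr, dual_repNr, dual_rep0r, oppr0, opprK, opprD, addr0, add0r, subr0, sub0r).

Ltac fin := apply/rowP => j; rewrite !mxE; ring.

Ltac distZ := rewrite ?(bZl Hb, bZr Hb, bZl Hmb, bZr Hmb, bZl Hdb, bZr Hdb, bZl Hdmb, bZr Hdmb,
  dual_repZl _ _ _ Hb, dual_repZl _ _ _ Hmb, dual_repZl _ _ _ Hdb, dual_repZl _ _ _ Hdmb,
  dual_repZr, scalerN).

Lemma Pd_bil : bilinear_op (Pd m Dl).
Proof.
split=> a u v w; apply: pairE; rewrite /Pd /=; dist; distZ; dist; fin.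
Qed.

Lemma Pd_comm u v : Pd m Dl u v = Pd m Dl v u.
Proof. case: u => x xi; case: v => y eta; apply: pairE; rewrite /Pd /= ?(Hc x y) ?(Hdc xi eta); fin. Qed.

Lemma Pd_inv u v w : omega_d (Pd m Dl u v) w = omega_d u (Pd m Dl v w).
Proof.
case: u => x xi; case: v => y eta; case: w => z zeta.
rewrite /omega_d /Pd /= !(pairingDl, pairingDr, pairingNl, pairingNr) !(mdp HB).
rewrite !(pairingC _ (dual_rep m _ _)) !(mp HA) !(pairingC _ (m _ _)).
rewrite (Hc y x) (Hc z x) (Hdc eta xi) (Hdc zeta xi); ring.
Qed.

Lemma Bd_inv u v w : omega_d (Bd br Dt u v) w = omega_d u (Bd br Dt v w).
Proof.
case: u => x xi; case: v => y eta; case: w => z zeta.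
rewrite /omega_d /Bd /mp_bracket /= !(pairingDl, pairingDr, pairingNl, pairingNr) !(rdp HB).
rewrite !(pairingC _ (dual_rep br _ _)) !(rp HA) !(pairingC _ (br _ _)).
rewrite (Hs y x) (Hs z x) (Hds eta xi) (Hds zeta xi) !(pairingNl, pairingNr); ring.
Qed.

Lemma from_diff (a b : V * V) d1 d2 : a - b = (d1, d2) -> d1 = 0 -> d2 = 0 -> a = b.
Proof.
move=> h h1 h2; apply/eqP; rewrite -subr_eq0 h h1 h2; apply/eqP; exact: pairE.
Qed.

Lemma double_MP :
  (forall xi x y, Dc4 m Dl xi x y = 0) -> (forall x xi eta, Dc3 m Dl x xi eta = 0) ->
  (forall xi x y, Dr2 br m Dl Dt xi x y = 0) -> (forall x xi eta, Dr1 br m Dl Dt x xi eta = 0) ->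
  (forall x xi y, Dbr br m Dl Dt x xi y = 0) -> (forall xi x eta, D4th br m Dl Dt xi x eta = 0) ->
  (forall x y v, RA3 br m x y v = 0) -> (forall x y v, RA4 br m x y v = 0) ->
  (forall x y v, AA m x y v = 0) ->
  (forall x y v, RD3 Dl Dt x y v = 0) -> (forall x y v, RD4 Dl Dt x y v = 0) ->
  (forall x y v, AD Dl x y v = 0) ->
  is_malcev (Bd br Dt) -> is_malcev_poisson (Bd br Dt) (Pd m Dl).
Proof.
move=> hc4 hc3 hr2 hr1 hbr h4th hRA3 hRA4 hAA hRD3 hRD4 hAD hM.
have hLeA : forall x y z, LeA br m x y z = 0.
  by move=> x y z; rewrite /LeA (proj2 (proj2 HA)) subrr.
have hLeD : forall x y z, LeD Dl Dt x y z = 0.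
  by move=> x y z; rewrite /LeD (proj2 (proj2 HB)) subrr.
have hAsA : forall x y z, AsA m x y z = 0.
  by move=> x y z; rewrite /AsA (proj2 (proj2 (proj1 (proj2 HA)))) subrr.
have hAsD : forall x y z, AsD Dl x y z = 0.
  by move=> x y z; rewrite /AsD (proj2 (proj2 (proj1 (proj2 HB)))) subrr.
have Bb : bilinear_op (Bd br Dt) by case: hM.
split; first exact: hM.
split.
  split; first exact: Pd_bil.
  split; first exact: Pd_comm.
  apply: (assoc_decomp Pd_bil) => x y z.
  - by apply: (from_diff (A1 HA HB x y z)); rewrite ?(hc4, hc3, hAA, hAD, hAsA, hAsD) ?oppr0 ?addr0 ?subrr.
  - by apply: (from_diff (A2 HA HB x y z)); rewrite ?(hc4, hc3, hAA, hAD, hAsA, hAsD) ?oppr0 ?addr0 ?subrr.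
  - by apply: (from_diff (A3 HA HB x y z)); rewrite ?(hc4, hc3, hAA, hAD, hAsA, hAsD) ?oppr0 ?addr0 ?subrr.
  - by apply: (from_diff (A4 HA HB x y z)); rewrite ?(hc4, hc3, hAA, hAD, hAsA, hAsD) ?oppr0 ?addr0 ?subrr.
  - by apply: (from_diff (A5 HA HB x y z)); rewrite ?(hc4, hc3, hAA, hAD, hAsA, hAsD) ?oppr0 ?addr0 ?subrr.
  - by apply: (from_diff (A6 HA HB x y z)); rewrite ?(hc4, hc3, hAA, hAD, hAsA, hAsD) ?oppr0 ?addr0 ?subrr.
  - by apply: (from_diff (A7 HA HB x y z)); rewrite ?(hc4, hc3, hAA, hAD, hAsA, hAsD) ?oppr0 ?addr0 ?subrr.
  - by apply: (from_diff (A8 HA HB x y z)); rewrite ?(hc4, hc3, hAA, hAD, hAsA, hAsD) ?oppr0 ?addr0 ?subrr.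
apply: (leib_decomp Bb Pd_bil) => x y z.
- by apply: (from_diff (L1 HA HB x y z)); rewrite ?(hLeA, hLeD, hbr, hRA4, hRD3, hr1, hr2, hRA3, hRD4, h4th) ?oppr0 ?addr0.
- by apply: (from_diff (L2 HA HB x y z)); rewrite ?(hLeA, hLeD, hbr, hRA4, hRD3, hr1, hr2, hRA3, hRD4, h4th) ?oppr0 ?addr0.
- by apply: (from_diff (L3 HA HB x y z)); rewrite ?(hLeA, hLeD, hbr, hRA4, hRD3, hr1, hr2, hRA3, hRD4, h4th) ?oppr0 ?addr0.
- by apply: (from_diff (L4 HA HB x y z)); rewrite ?(hLeA, hLeD, hbr, hRA4, hRD3, hr1, hr2, hRA3, hRD4, h4th) ?oppr0 ?addr0.
- by apply: (from_diff (L5 HA HB x y z)); rewrite ?(hLeA, hLeD, hbr, hRA4, hRD3, hr1, hr2, hRA3, hRD4, h4th) ?oppr0 ?addr0.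
- by apply: (from_diff (L6 HA HB x y z)); rewrite ?(hLeA, hLeD, hbr, hRA4, hRD3, hr1, hr2, hRA3, hRD4, h4th) ?oppr0 ?addr0.
- by apply: (from_diff (L7 HA HB x y z)); rewrite ?(hLeA, hLeD, hbr, hRA4, hRD3, hr1, hr2, hRA3, hRD4, h4th) ?oppr0 ?addr0.
- by apply: (from_diff (L8 HA HB x y z)); rewrite ?(hLeA, hLeD, hbr, hRA4, hRD3, hr1, hr2, hRA3, hRD4, h4th) ?oppr0 ?addr0.
Qed.

Lemma Bd_AA x y : Bd br Dt (x, 0) (y, 0) = (br x y, 0).
Proof. by apply: pairE; rewrite /Bd /mp_bracket /=; dist. Qed.
Lemma Bd_DD x y : Bd br Dt (0, x) (0, y) = (0, brd x y).
Proof. by apply: pairE; rewrite /Bd /mp_bracket /=; dist. Qed.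
Lemma Pd_AA x y : Pd m Dl (x, 0) (y, 0) = (m x y, 0).
Proof. by apply: pairE; rewrite /Pd /=; dist. Qed.
Lemma Pd_DD x y : Pd m Dl (0, x) (0, y) = (0, md x y).
Proof. by apply: pairE; rewrite /Pd /=; dist. Qed.
End Double2.
Section Uniq.
Variable K : fieldType.
Variable n : nat.
Local Notation V := 'rV[K]_n.
Variables br m : V -> V -> V.
Variables Dl Dt : 'I_n -> tensor2 K n.
Hypothesis HA : is_malcev_poisson br m.
Hypothesis HB : is_malcev_poisson (dual_op Dt) (dual_op Dl).
Local Notation brd := (dual_op Dt).
Local Notation md := (dual_op Dl).
Local Notation r1 := (dual_rep br).
Local Notation r2 := (dual_rep brd).
Local Notation mu1 x xi := (- dual_rep m x xi).
Local Notation mu2 xi x := (- dual_rep md xi x).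

Let Hb : bilinear_op br. Proof. by case: HA => [[]]. Qed.
Let Hs : forall x y, br x y = - br y x. Proof. by case: HA => [[_ []]]. Qed.
Let Hmb : bilinear_op m. Proof. by case: HA => [_ [[]]]. Qed.
Let Hc : forall x y, m x y = m y x. Proof. by case: HA => [_ [[_ []]]]. Qed.
Let Hdb : bilinear_op brd. Proof. by case: HB => [[]]. Qed.
Let Hds : forall x y, brd x y = - brd y x. Proof. by case: HB => [[_ []]]. Qed.
Let Hdmb : bilinear_op md. Proof. by case: HB => [_ [[]]]. Qed.
Let Hdc : forall x y, md x y = md y x. Proof. by case: HB => [_ [[_ []]]]. Qed.

Ltac dist := rewrite ?(bDl Hb, bDr Hb, bNl Hb, bNr Hb, b0l Hb, b0r Hb,
  bDl Hmb, bDr Hmb, bNl Hmb, bNr Hmb, b0l Hmb, b0r Hmb,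
  bDl Hdb, bDr Hdb, bNl Hdb, bNr Hdb, b0l Hdb, b0r Hdb,
  bDl Hdmb, bDr Hdmb, bNl Hdmb, bNr Hdmb, b0l Hdmb, b0r Hdmb,
  dual_repDl _ _ _ Hb, dual_repDl _ _ _ Hmb, dual_repDl _ _ _ Hdb, dual_repDl _ _ _ Hdmb,
  dual_repNl _ _ Hb, dual_repNl _ _ Hmb, dual_repNl _ _ Hdb, dual_repNl _ _ Hdmb,
  dual_rep0l _ Hb, dual_rep0l _ Hmb, dual_rep0l _ Hdb, dual_rep0l _ Hdmb,
  dual_repDr, dual_repNr, dual_rep0r, oppr0, opprK, opprD, addr0, add0r, subr0, sub0r).

Ltac fin := apply/rowP => j; rewrite !mxE; ring.

Variables B P : V * V -> V * V -> V * V.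
Hypothesis HMP : is_malcev_poisson B P.
Hypothesis rBA : forall x y, B (x, 0) (y, 0) = (br x y, 0).
Hypothesis rPA : forall x y, P (x, 0) (y, 0) = (m x y, 0).
Hypothesis rBD : forall x y, B (0, x) (0, y) = (0, brd x y).
Hypothesis rPD : forall x y, P (0, x) (0, y) = (0, md x y).
Hypothesis iP : forall u v w, omega_d (P u v) w = omega_d u (P v w).
Hypothesis iB : forall u v w, omega_d (B u v) w = omega_d u (B v w).

Let HBb : bilinear_op B. Proof. by case: HMP => [[]]. Qed.
Let HBs : forall u v, B u v = - B v u. Proof. by case: HMP => [[_ []]]. Qed.
Let HPb : bilinear_op P. Proof. by case: HMP => [_ [[]]]. Qed.
Let HPc : forall u v, P u v = P v u. Proof. by case: HMP => [_ [[_ []]]]. Qed.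

Lemma B_AD x eta : B (x, 0) (0, eta) = (- r2 eta x, r1 x eta).
Proof.
apply: pairE => /=.
  apply: pairing_injl => zeta.
  have := iB (x, 0) (0, eta) (0, zeta); rewrite rBD /omega_d /= !pairing0l !addr0 => ->.
  by rewrite pairingNl (rdp HB) opprK.
apply: pairing_injr => z.
have := iB (0, eta) (x, 0) (z, 0); rewrite rBA /omega_d /= ?pairing0r ?pairing0l ?add0r.
rewrite HBs /= pairingNr => /eqP; rewrite eqr_oppLR => /eqP ->.
by rewrite (pairingC z) (rp HA) pairingC.
Qed.

Lemma P_AD x eta : P (x, 0) (0, eta) = (mu2 eta x, mu1 x eta).
Proof.
apply: pairE => /=.
  apply: pairing_injl => zeta.
  have := iP (x, 0) (0, eta) (0, zeta); rewrite rPD /omega_d /= !pairing0l !addr0 => ->.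
  by rewrite pairingNl (mdp HB) opprK.
apply: pairing_injr => z.
have := iP (0, eta) (x, 0) (z, 0); rewrite rPA /omega_d /= ?pairing0r ?pairing0l ?add0r.
rewrite HPc /= => ->.
by rewrite (pairingC z) pairingNl (mp HA) opprK pairingC.
Qed.

Lemma B_uniq u v : B u v = Bd br Dt u v.
Proof.
rewrite {1}(pair_dec u) {1}(pair_dec v) !(bDl HBb, bDr HBb).
rewrite (HBs (0, u.2) (v.1, 0)) !B_AD rBA rBD.
case: u => x xi; case: v => y eta; apply: pairE; rewrite /Bd /mp_bracket /=; dist; fin.
Qed.

Lemma P_uniq u v : P u v = Pd m Dl u v.
Proof.
rewrite {1}(pair_dec u) {1}(pair_dec v) !(bDl HPb, bDr HPb).
rewrite (HPc (0, u.2) (v.1, 0)) !P_AD rPA rPD.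
case: u => x xi; case: v => y eta; apply: pairE; rewrite /Pd /=; dist; fin.
Qed.
End Uniq.
Section Final.
Variable K : fieldType.
Variable n : nat.
Local Notation V := 'rV[K]_n.
Variables br m : V -> V -> V.
Variables Dl Dt : 'I_n -> tensor2 K n.
Hypothesis HA : is_malcev_poisson br m.
Hypothesis HB : is_malcev_poisson (dual_op Dt) (dual_op Dl).
Local Notation brd := (dual_op Dt).
Local Notation md := (dual_op Dl).

Lemma tensor_zero (T : tensor2 K n) :
  (forall a b, T a b = 0) <-> (forall xi eta, tp T xi eta = 0).
Proof.
split=> h; last by move=> a b; rewrite -tp_ev.
move=> xi eta; rewrite /tp big1 // => a _; rewrite big1 // => b _.
by rewrite h mulr0.
Qed.

Lemma vzero (v : V) : (forall w, pairing v w = 0) -> v = 0.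
Proof. by move=> h; apply: pairing_injl => w; rewrite h pairing0l. Qed.

Lemma vsub (a b : V) : a - b = 0 -> a = b.
Proof. by move/eqP; rewrite subr_eq0 => /eqP. Qed.

Lemma eqC :
  (forall x y a b, cop Dl (m x y) a b = map_l (m x) (cop Dl y) a b + map_r (m y) (cop Dl x) a b)
  <-> (forall x y xi eta, Cc m Dl x y xi eta = 0).
Proof.
split=> h x y.
  move=> xi eta; rewrite -tp_c; move: xi eta; apply/tensor_zero => a b.
  by rewrite h subrr.
have h2 : forall xi eta, tp (fun a b => cop Dl (m x y) a b -
   (map_l (m x) (cop Dl y) a b + map_r (m y) (cop Dl x) a b)) xi eta = 0.
  by move=> xi eta; rewrite tp_c h.
by move=> a b; apply: subr0_eq; exact: ((tensor_zero _).2 h2 a b).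
Qed.

Lemma eqE1 :
  (forall x y a b, cop Dt (m x y) a b + map_l (br y) (cop Dl x) a b
     - map_r (m x) (cop Dt y) a b + map_l (br x) (cop Dl y) a b
     - map_r (m y) (cop Dt x) a b = 0)
  <-> (forall x y xi eta, E1 br m Dl Dt x y xi eta = 0).
Proof.
split=> h x y.
  by move=> xi eta; rewrite -(tp_e1 br m HB); move: xi eta; apply/tensor_zero.
by apply/tensor_zero => xi eta; rewrite tp_e1.
Qed.

Lemma eqE2 :
  (forall x y a b, cop Dl (br x y) a b - map_l (m y) (cop Dt x) a b
     - map_r (br x) (cop Dl y) a b + map_r (m y) (cop Dt x) a b
     - map_l (br x) (cop Dl y) a b = 0)
  <-> (forall x y xi eta, E2 br m Dl Dt x y xi eta = 0).
Proof.
split=> h x y.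
  by move=> xi eta; rewrite -(tp_e2 br m HB); move: xi eta; apply/tensor_zero.
by apply/tensor_zero => xi eta; rewrite tp_e2.
Qed.

Lemma eqC3 :
  (forall x xi eta, - dual_rep m x (md xi eta) =
     md (- dual_rep m x xi) eta + - dual_rep m (- dual_rep md xi x) eta)
  <-> (forall x y xi eta, Cc m Dl x y xi eta = 0).
Proof.
split=> h.
  by move=> x y xi eta; rewrite -(M3_p HA HB x xi eta y) h subrr pairing0l.
move=> x xi eta; apply: subr0_eq; apply: vzero => y.
by rewrite (M3_p HA HB x xi eta y) h.
Qed.

Lemma eqC4 :
  (forall xi x y, - dual_rep md xi (m x y) =
     m (- dual_rep md xi x) y + - dual_rep md (- dual_rep m x xi) y)
  <-> (forall x y xi eta, Cc m Dl x y xi eta = 0).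
Proof.
split=> h.
  by move=> x y xi eta; rewrite -(M4_p HA HB xi x y eta) h subrr pairing0l.
move=> xi x y; apply: subr0_eq; apply: vzero => eta.
by rewrite (M4_p HA HB xi x y eta) h.
Qed.

Lemma eqR2 :
  (forall xi x y, dual_rep brd xi (m x y) =
    m (dual_rep brd xi x) y + m x (dual_rep brd xi y)
     - - dual_rep md (dual_rep br x xi) y - - dual_rep md (dual_rep br y xi) x)
  <-> (forall x y xi eta, E1 br m Dl Dt x y xi eta = 0).
Proof.
split=> h.
  move=> x y xi eta; apply/eqP; rewrite -oppr_eq0 -(Mr2_p HA HB xi x y eta) h.
  by rewrite subrr pairing0l.
move=> xi x y; apply: subr0_eq; apply: vzero => eta.
by rewrite (Mr2_p HA HB xi x y eta) h oppr0.
Qed.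

Lemma eq4th :
  (forall xi x eta, brd xi (- dual_rep m x eta) - dual_rep br (- dual_rep md eta x) xi =
    - dual_rep m (dual_rep brd xi x) eta - md (dual_rep br x xi) eta
     + - dual_rep m x (brd xi eta))
  <-> (forall x y xi eta, E1 br m Dl Dt x y xi eta = 0).
Proof.
split=> h.
  move=> x y xi eta; apply/eqP; rewrite -oppr_eq0 -(M4th_p HA HB xi x eta y) h.
  by rewrite subrr pairing0l.
move=> xi x eta; apply: subr0_eq; apply: vzero => y.
by rewrite (M4th_p HA HB xi x eta y) h oppr0.
Qed.

Lemma eqR1 :
  (forall x xi eta, dual_rep br x (md xi eta) =
    md (dual_rep br x xi) eta + md xi (dual_rep br x eta)
     - - dual_rep m (dual_rep brd xi x) eta - - dual_rep m (dual_rep brd eta x) xi)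
  <-> (forall x y xi eta, E2 br m Dl Dt x y xi eta = 0).
Proof.
split=> h.
  move=> x y xi eta; apply/eqP; rewrite -oppr_eq0 -(Mr1_p HA HB x xi eta y) h.
  by rewrite subrr pairing0l.
move=> x xi eta; apply: subr0_eq; apply: vzero => y.
by rewrite (Mr1_p HA HB x xi eta y) h oppr0.
Qed.

Lemma eqBr :
  (forall x xi y, br x (- dual_rep md xi y) - dual_rep brd (- dual_rep m y xi) x =
    - dual_rep md (dual_rep br x xi) y - m (dual_rep brd xi x) y
     + - dual_rep md xi (br x y))
  <-> (forall x y xi eta, E2 br m Dl Dt x y xi eta = 0).
Proof.
split=> h.
  move=> x y xi eta; apply/eqP; rewrite -oppr_eq0 -(Mbr_p HA HB x xi y eta) h.
  by rewrite subrr pairing0l.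
move=> x xi y; apply: subr0_eq; apply: vzero => eta.
by rewrite (Mbr_p HA HB x xi y eta) h oppr0.
Qed.
End Final.
Theorem mainTheorem4 (K : closedFieldType) (charK : [pchar K] =i pred0) (n : nat)
    (br m : 'rV[K]_n -> 'rV[K]_n -> 'rV[K]_n)
    (Dl Dt : 'I_n -> 'I_n -> 'I_n -> K) :
  is_malcev_poisson br m ->
  is_malcev_poisson (dual_op Dt) (dual_op Dl) ->
  (MP_bialgebra br m Dl Dt <->
   matched_pair br m (dual_op Dt) (dual_op Dl)
     (dual_rep br) (fun x xi => - dual_rep m x xi)
     (dual_rep (dual_op Dt)) (fun xi x => - dual_rep (dual_op Dl) xi x)) /\
  (matched_pair br m (dual_op Dt) (dual_op Dl)
     (dual_rep br) (fun x xi => - dual_rep m x xi)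
     (dual_rep (dual_op Dt)) (fun xi x => - dual_rep (dual_op Dl) xi x) <->
   std_Manin_triple br m (dual_op Dt) (dual_op Dl)).
Proof.
move=> HA HB.
have two : (2%:R : K) != 0 by move/pcharf0P: charK => ->.
have repA := MP_rep_coad two HA.
have repD := MP_rep_coad two HB.
have [mrA [arA [r3A r4A]]] := repA.
have [mrD [arD [r3D r4D]]] := repD.
have mtp_of :
  (forall xi x y, Dc4 m Dl xi x y = 0) -> (forall xi x y, Dr2 br m Dl Dt xi x y = 0) ->
  (forall x xi eta, Dr1 br m Dl Dt x xi eta = 0) ->
  is_malcev (mp_bracket br (dual_op Dt) (dual_rep br) (dual_rep (dual_op Dt))) ->
  matched_pair br m (dual_op Dt) (dual_op Dl)
     (dual_rep br) (fun x xi => - dual_rep m x xi)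
     (dual_rep (dual_op Dt)) (fun xi x => - dual_rep (dual_op Dl) xi x).
  move=> d4 dr2 dr1 hM.
  have c4 : forall xi x y, - dual_rep (dual_op Dl) xi (m x y) =
     m (- dual_rep (dual_op Dl) xi x) y + - dual_rep (dual_op Dl) (- dual_rep m x xi) y.
    by move=> xi x y; apply: subr0_eq; exact: d4.
  have cc := (eqC4 HA HB).1 c4.
  have r2 : forall xi x y, dual_rep (dual_op Dt) xi (m x y) =
    m (dual_rep (dual_op Dt) xi x) y + m x (dual_rep (dual_op Dt) xi y)
     - - dual_rep (dual_op Dl) (dual_rep br x xi) y - - dual_rep (dual_op Dl) (dual_rep br y xi) x.
    by move=> xi x y; apply: subr0_eq; exact: dr2.
  have e1 := (eqR2 HA HB).1 r2.
  have r1 : forall x xi eta, dual_rep br x (dual_op Dl xi eta) =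
    dual_op Dl (dual_rep br x xi) eta + dual_op Dl xi (dual_rep br x eta)
     - - dual_rep m (dual_rep (dual_op Dt) xi x) eta - - dual_rep m (dual_rep (dual_op Dt) eta x) xi.
    by move=> x xi eta; apply: subr0_eq; exact: dr1.
  have e2 := (eqR1 HA HB).1 r1.
  split; first exact: arA.
  split; first exact: arD.
  split; first exact: ((eqC3 HA HB).2 cc).
  split; first exact: c4.
  split; first exact: mrA.
  split; first exact: mrD.
  split; first exact: hM.
  split; first exact: repA.
  split; first exact: repD.
  split; first exact: r2.
  split; first exact: r1.
  split; first exact: ((eqBr HA HB).2 e2).
  exact: ((eq4th HA HB).2 e1).
split.
  split.
    case=> _ [_ [hc [[hrA [hrD hM]] [he1 he2]]]].
    have cc := (eqC m Dl).1 hc.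
    have e1 := (eqE1 br m HB).1 he1.
    have e2 := (eqE2 br m HB).1 he2.
    apply: mtp_of => //.
    - by move=> xi x y; rewrite /Dc4 ((eqC4 HA HB).2 cc) subrr.
    - by move=> xi x y; rewrite /Dr2 ((eqR2 HA HB).2 e1) subrr.
    - by move=> x xi eta; rewrite /Dr1 ((eqR1 HA HB).2 e2) subrr.
  case=> _ [_ [c3 [_ [hrA [hrD [hM [_ [_ [r2 [r1 _]]]]]]]]]].
  split; first exact: HA.
  split; first exact: (coalg_MP two HB).
  split; first exact: ((eqC m Dl).2 ((eqC3 HA HB).1 c3)).
  split; first by split; [exact: hrA | split; [exact: hrD | exact: hM]].
  split; first exact: ((eqE1 br m HB).2 ((eqR2 HA HB).1 r2)).
  exact: ((eqE2 br m HB).2 ((eqR1 HA HB).1 r1)).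
split.
  case=> _ [_ [c3 [c4 [_ [_ [hM [_ [_ [r2 [r1 [hbr h4th]]]]]]]]]]].
  exists (Bd br Dt), (Pd m Dl).
  split.
    apply: (double_MP HA HB) => //.
    - by move=> xi x y; rewrite /Dc4 c4 subrr.
    - by move=> x xi eta; rewrite /Dc3 c3 subrr.
    - by move=> xi x y; rewrite /Dr2 r2 subrr.
    - by move=> x xi eta; rewrite /Dr1 r1 subrr.
    - by move=> x xi y; rewrite /Dbr hbr subrr.
    - by move=> xi x eta; rewrite /D4th h4th subrr.
    - by move=> x y v; rewrite /RA3 r3A subrr.
    - by move=> x y v; rewrite /RA4 r4A subrr.
    - by move=> x y v; rewrite /AA (proj2 arA) subrr.
    - by move=> x y v; rewrite /RD3 r3D subrr.
    - by move=> x y v; rewrite /RD4 r4D subrr.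
    - by move=> x y v; rewrite /AD (proj2 arD) subrr.
  split; first exact: (Bd_AA br HB).
  split; first exact: (Pd_AA m HB).
  split; first exact: (Bd_DD Dt HA).
  split; first exact: (Pd_DD Dl HA).
  split; first exact: (Pd_inv HA HB).
  exact: (Bd_inv HA HB).
case=> B [P [hMP [rBA [rPA [rBD [rPD [iP iB]]]]]]].
have eB : B = Bd br Dt.
  by apply: functional_extensionality => u; apply: functional_extensionality => v;
     exact: (B_uniq HA HB hMP rBA rBD iB).
have eP : P = Pd m Dl.
  by apply: functional_extensionality => u; apply: functional_extensionality => v;
     exact: (P_uniq HA HB hMP rPA rPD iP).
subst B P.
have [[_ [_ hMal]] [[_ [_ hAs]] hLe]] := hMP.
apply: mtp_of.
- move=> xi x y.
  have := A2 HA HB y x xi; rewrite hAs subrr => /(congr1 fst) /= <-. done.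
- move=> xi x y.
  have := L5 HA HB xi x y; rewrite hLe subrr => /(congr1 fst) /= <-. done.
- move=> x xi eta.
  have := L4 HA HB x xi eta; rewrite hLe subrr => /(congr1 snd) /= <-. done.
- by case: hMP.
Qed.
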